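(* Let $\zeta_c\in\mathcal C$ be a simple critical point, with representative critical point $x_{*,c}$ and branch value $\lambda_c$. Then there exist a neighborhood $\mathcal O$ of $\zeta_c$ and unique $C^1$ maps $\zeta\mapsto x_*(\zeta)$, $\zeta\mapsto\lambda(\zeta)$ on $\mathcal O$ with $(x_*(\zeta_c),\lambda(\zeta_c))=(x_{*,c},\lambda_c)$ and $F(\lambda(\zeta),x_*(\zeta);\zeta)=\partial_yF(\lambda(\zeta),x_*(\zeta);\zeta)=0$. If in addition $x_*(\zeta)$ remains a representative of the unique dominant orbit for $\zeta\in\mathcal O$, then $\rho_*(\zeta)=|x_*(\zeta)|$ on $\mathcal O$, and $\rho_*$ is $C^1$ on $\mathcal O$.
   Context: Fix integers $N\ge1$ and $2\le s_1<\dots<s_N$; put $s=\gcd(s_1,\dots,s_N)$. For $\zeta\in\mathbb C^N$ set $F(y,x;\zeta)=y-1-\sum_{n=1}^N\zeta_n x^{s_n}y^{s_n}$. The Taylor branch $U(x;\zeta)$ is the unique germ analytic at $x=0$ with $U(0;\zeta)=1$ and $F(U(x;\zeta),x;\zeta)=0$; its analytic continuation along paths is called the chosen Taylor sheet. $\rho_*(\zeta)$ is the supremum of $\rho>0$ such that $U(\cdot;\zeta)$ extends analytically to $|x|<\rho$. Dominant regime: $\rho_*(\zeta)<\infty$ and the chosen Taylor sheet has exactly $s$ singular points on $|x|=\rho_*(\zeta)$, forming one orbit $\{e^{2\pi ij/s}x_*(\zeta)\}_{j=0}^{s-1}$. The branch value at a singular point $x_*$ is $\lambda=\lim_{x\to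 x_*}U(x;\zeta)$ along the sheet (finite). $\mathcal C$ is the set of $\zeta$ in the dominant regime with $\rho_*(\zeta)=1$. $\zeta_c\in\mathcal C$ is a simple critical point if for a representative $x_{*,c}$ with branch value $\lambda_c$: $F=\partial_yF=0$ and $\partial_y^2F\ne0$ at $(\lambda_c,x_{*,c};\zeta_c)$. *)

(* Defs.v *)
From mathcomp Require Import ssreflect ssrfun ssrbool eqtype ssrnat div fintype bigop.
From Stdlib Require Import Reals.
From Coquelicot Require Import Coquelicot.

Set Implicit Arguments.
Unset Strict Implicit.

Local Open Scope R_scope.

Definition CN (N : nat) := 'I_N -> C.

Definition sgcd (N : nat) (s : 'I_N -> nat) : nat := \big[gcdn/O]_(i < N) s i.

Definition F (N : nat) (s : 'I_N -> nat) (z : CN N) (y x : C) : C :=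
  Cminus (Cminus y (RtoC 1))
         (\big[Cplus/RtoC 0]_(i < N) Cmult (z i) (Cmult (Cpow x (s i)) (Cpow y (s i)))).

Definition holo_at (f : C -> C) (z : C) : Prop :=
  @ex_derive C_AbsRing C_NormedModule f z.

Definition dyF N (s : 'I_N -> nat) (z : CN N) (y x : C) : C :=
  C_derive (fun w => F s z w x) y.
Definition dyyF N (s : 'I_N -> nat) (z : CN N) (y x : C) : C :=
  C_derive (fun w => dyF s z w x) y.

(* A representative of the Taylor germ: analytic near 0, U(0)=1, F(U(x),x)=0. *)
Definition taylor_germ N (s : 'I_N -> nat) (z : CN N) (U : C -> C) : Prop :=
  U (RtoC 0) = RtoC 1 /\
  exists r, 0 < r /\ forall x, Cmod x < r -> holo_at U x /\ F s z (U x) x = RtoC 0.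

Definition continues_germ N (s : 'I_N -> nat) (z : CN N) (D : C -> Prop) (h : C -> C) : Prop :=
  exists U, taylor_germ s z U /\
   (forall x, D x -> holo_at h x) /\
   exists r, 0 < r /\ forall x, Cmod x < r -> h x = U x.

Definition extends_to N (s : 'I_N -> nat) (z : CN N) (rho : R) : Prop :=
  exists h, continues_germ s z (fun x => Cmod x < rho) h.

Definition rho_star N (s : 'I_N -> nat) (z : CN N) : Rbar :=
  Lub_Rbar (fun rho => 0 < rho /\ extends_to s z rho).

Definition regular_pt N (s : 'I_N -> nat) (z : CN N) (x0 : C) : Prop :=
  exists eps, 0 < eps /\ exists h,
    continues_germ s z
      (fun x => Cmod x < real (rho_star s z) \/ Cmod (Cminus x x0) < eps) h.

Definition singular_pt N (s : 'I_N -> nat) (z : CN N) (x0 : C) : Prop :=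
  is_finite (rho_star s z) /\ Cmod x0 = real (rho_star s z) /\ ~ regular_pt s z x0.

Definition root_unity (m j : nat) : C :=
  (cos (2 * PI * INR j / INR m), sin (2 * PI * INR j / INR m)).

Definition dominant N (s : 'I_N -> nat) (z : CN N) : Prop :=
  is_finite (rho_star s z) /\
  exists x0, forall x, singular_pt s z x <->
    exists j, (j < sgcd s)%coq_nat /\ x = Cmult (root_unity (sgcd s) j) x0.

Definition branch_value N (s : 'I_N -> nat) (z : CN N) (x0 lam : C) : Prop :=
  exists h, continues_germ s z (fun x => Cmod x < real (rho_star s z)) h /\
    filterlim h (within (fun x => Cmod x < real (rho_star s z)) (@locally C_UniformSpace x0))
                (@locally C_UniformSpace lam).

Definition crit_set N (s : 'I_N -> nat) (z : CN N) : Prop :=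
  dominant s z /\ rho_star s z = Finite 1.

Definition CN_ball N (z : CN N) (r : R) (w : CN N) : Prop :=
  forall i, Cmod (Cminus (w i) (z i)) < r.

Definition CN_open N (O : CN N -> Prop) : Prop :=
  forall z, O z -> exists r, 0 < r /\ forall w, CN_ball z r w -> O w.

(* z + t * u * e_i  (t real, u in {1, i}) : the real coordinate directions of C^N *)
Definition shift N (z : CN N) (i : 'I_N) (b : bool) (t : R) : CN N :=
  fun j => if j == i then Cplus (z j) (Cmult (RtoC t) (if b then Ci else RtoC 1)) else z j.

(* Real C^1 on an open set O of C^N ~ R^{2N}: all 2N real partial derivatives
   exist on O and are continuous on O. *)
Definition C1_on N {V : NormedModule R_AbsRing} (f : CN N -> V) (O : CN N -> Prop) : Prop :=
  exists D : 'I_N -> bool -> CN N -> V,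
    (forall z i b, O z -> @is_derive R_AbsRing V (fun t => f (shift z i b t)) 0 (D i b z)) /\
    (forall i b z, O z -> forall eps, 0 < eps ->
       exists del, 0 < del /\ forall w, O w -> CN_ball z del w ->
         norm (minus (D i b w) (D i b z)) < eps).

(* Main.v *)
Require Import Defs.
From mathcomp Require Import ssreflect ssrfun ssrbool eqtype ssrnat div fintype bigop.
From mathcomp Require Import seq.
From Stdlib Require Import Reals Lra Lia FunctionalExtensionality ClassicalEpsilon.
From Coquelicot Require Import Coquelicot.
Local Open Scope R_scope.

Lemma Cmod_minus_le (a b : C) : Cmod (a - b)%C <= Cmod a + Cmod b.
Proof. unfold Cminus. rewrite -(Cmod_opp b). apply Cmod_triangle. Qed.

Lemma Cmod_sub_tri (a b c : C) : Cmod (a - c)%C <= Cmod (a - b)%C + Cmod (b - c)%C.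
Proof. replace (a - c)%C with ((a - b) + (b - c))%C by ring. apply Cmod_triangle. Qed.

Lemma Cmod_rev (a b : C) : Cmod a - Cmod b <= Cmod (a - b)%C.
Proof. have := Cmod_triangle (a - b)%C b. replace (a - b + b)%C with a by ring. lra. Qed.

Lemma Cmod_rev_abs (a b : C) : Rabs (Cmod a - Cmod b) <= Cmod (a - b)%C.
Proof.
apply Rabs_le; split; last by apply Cmod_rev.
have := Cmod_rev b a. replace (b - a)%C with (- (a - b))%C by ring. rewrite Cmod_opp. lra.
Qed.

Definition Clim {T} (F : (T -> Prop) -> Prop) (f : T -> C) (l : C) :=
  forall eps, 0 < eps -> F (fun x => Cmod (f x - l)%C < eps).

Section ClimS.
Context {T : Type} (F : (T -> Prop) -> Prop) (HF : Filter F).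

Lemma Clim_const (c : C) : Clim F (fun _ => c) c.
Proof. move=> e he. apply: filter_imp (filter_true). move=> _ _ /=. have ->: (c - c)%C = RtoC 0 by ring. rewrite Cmod_0; lra. Qed.

Lemma Clim_ext (f g : T -> C) (l : C) : F (fun x => f x = g x) -> Clim F f l -> Clim F g l.
Proof. move=> Hfg Hf e he. apply: filter_imp (filter_and _ _ Hfg (Hf e he)).
by move=> x [<- ?]. Qed.

Lemma Clim_le (f g : T -> C) (l m : C) M : 0 <= M -> F (fun x => Cmod (g x - m)%C <= M * Cmod (f x - l)%C) ->
  Clim F f l -> Clim F g m.
Proof. move=> HM Hb Hf e he.
have he' : 0 < e / (M + 1) by apply Rdiv_lt_0_compat; lra.
apply: filter_imp (filter_and _ _ Hb (Hf _ he')). move=> x [H1 H2].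
apply: Rle_lt_trans H1 _.
have : M * Cmod (f x - l)%C <= M * (e / (M+1)) by apply Rmult_le_compat_l; lra.
have : M * (e / (M + 1)) < e.
{ apply (Rmult_lt_reg_r (M+1)); first lra. field_simplify; lra. }
lra. Qed.

Lemma Clim_plus (f g : T -> C) (l m : C) : Clim F f l -> Clim F g m -> Clim F (fun x => f x + g x)%C (l + m)%C.
Proof. move=> Hf Hg e he.
have he2 : 0 < e/2 by lra.
apply: filter_imp (filter_and _ _ (Hf _ he2) (Hg _ he2)). move=> x [H1 H2].
replace (f x + g x - (l + m))%C with ((f x - l) + (g x - m))%C by ring.
have := Cmod_triangle (f x - l)%C (g x - m)%C. lra. Qed.

Lemma Clim_opp (f : T -> C) (l : C) : Clim F f l -> Clim F (fun x => - f x)%C (- l)%C.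
Proof. move=> Hf e he. apply: filter_imp (Hf e he). move=> x H.
replace (- f x - - l)%C with (- (f x - l))%C by ring. by rewrite Cmod_opp. Qed.

Lemma Clim_minus (f g : T -> C) (l m : C) : Clim F f l -> Clim F g m -> Clim F (fun x => f x - g x)%C (l - m)%C.
Proof. move=> Hf Hg. apply: Clim_plus => //. by apply: Clim_opp. Qed.

Lemma Clim_mult (f g : T -> C) (l m : C) : Clim F f l -> Clim F g m -> Clim F (fun x => f x * g x)%C (l * m)%C.
Proof. move=> Hf Hg e he.
set L := Cmod l. set M := Cmod m.
have HL : 0 <= L := Cmod_ge_0 _. have HM : 0 <= M := Cmod_ge_0 _.
set d := Rmin 1 (e / (L + M + 1)).
have hd : 0 < d. { apply Rmin_pos; first lra. apply Rdiv_lt_0_compat; lra. }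
have hd1 : d <= 1 by apply Rmin_l.
have hd2 : d * (L + M + 1) <= e.
{ have : d <= e / (L + M + 1) by apply Rmin_r.
  move=> H. apply (Rle_trans _ (e / (L + M + 1) * (L + M + 1))).
  apply Rmult_le_compat_r; lra. right; field; lra. }
apply: filter_imp (filter_and _ _ (Hf _ hd) (Hg _ hd)). move=> x [H1 H2].
replace (f x * g x - l * m)%C with ((f x - l) * (g x - m) + l * (g x - m) + (f x - l) * m)%C by ring.
set a := Cmod (f x - l)%C in H1. set b := Cmod (g x - m)%C in H2.
have ha : 0 <= a := Cmod_ge_0 _. have hb : 0 <= b := Cmod_ge_0 _.
apply (Rle_lt_trans _ (a * b + L * b + a * M)).
{ have := Cmod_triangle ((f x - l) * (g x - m) + l * (g x - m))%C ((f x - l) * m)%C.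
  have := Cmod_triangle ((f x - l) * (g x - m))%C (l * (g x - m))%C.
  rewrite !Cmod_mult. rewrite -/a -/b -/L -/M. lra. }
have : a * b <= a by nra.
have : L * b <= L * d by nra.
have : a * M <= d * M by nra.
nra. Qed.

Lemma Clim_inv (f : T -> C) (l : C) : l <> RtoC 0 -> Clim F f l -> Clim F (fun x => / f x)%C (/ l)%C.
Proof. move=> Hl Hf e he.
have HL : 0 < Cmod l by exact (proj1 (Cmod_gt_0 l) Hl).
set d := Rmin (Cmod l / 2) (e * (Cmod l * Cmod l) / 2).
have hd : 0 < d. { apply Rmin_pos; first lra. apply Rdiv_lt_0_compat; last lra. apply Rmult_lt_0_compat; first lra. by apply Rmult_lt_0_compat. }
apply: filter_imp (Hf _ hd). move=> x H1.
have hd1 : d <= Cmod l / 2 by apply Rmin_l.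
have hd2 : d <= e * (Cmod l * Cmod l) / 2 by apply Rmin_r.
have hfx : Cmod l / 2 <= Cmod (f x).
{ have := Cmod_rev l (f x). replace (l - f x)%C with (- (f x - l))%C by ring. rewrite Cmod_opp. lra. }
have fx0 : f x <> 0%C. { apply/Cmod_gt_0. lra. }
replace (/ f x - / l)%C with ((- (f x - l)) / (f x * l))%C by (field; split; auto).
rewrite Cmod_div; last by apply Cmult_neq_0.
rewrite Cmod_opp Cmod_mult.
apply (Rmult_lt_reg_r (Cmod (f x) * Cmod l)). nra.
field_simplify; last nra.
nra. Qed.

End ClimS.
Fixpoint mono (n : nat) (a b : C) : C :=
  match n with O => RtoC 0 | S k => (Cpow a k + b * mono k a b)%C end.

Lemma mono_diff n a b : (Cpow a n - Cpow b n = (a - b) * mono n a b)%C.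
Proof. elim: n => [|k IH] /=; first ring.
have -> : (a * Cpow a k - b * Cpow b k = (a - b) * Cpow a k + b * (Cpow a k - Cpow b k))%C by ring.
rewrite IH. ring. Qed.

Lemma RtoC_INRS (k:nat) : RtoC (INR (S k)) = (RtoC (INR k) + 1)%C.
Proof. rewrite S_INR. unfold RtoC. apply injective_projections; simpl; ring. Qed.

Lemma mono_aux k t : (t * (RtoC (INR k) * Cpow t (Nat.pred k)) = RtoC (INR k) * Cpow t k)%C.
Proof. destruct k as [|j]; simpl. replace (INR 0) with 0 by reflexivity. ring. ring. Qed.

Lemma mono_diag n t : mono n t t = (RtoC (INR n) * Cpow t (Nat.pred n))%C.
Proof. elim: n => [|k IH]; first (simpl; replace (INR 0) with 0 by reflexivity; ring).
rewrite /= IH mono_aux RtoC_INRS. ring. Qed.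

Lemma Cpow_bound a n B : 0 <= B -> Cmod a <= B -> Cmod (Cpow a n) <= B ^ n.
Proof. move=> HB Ha. rewrite Cmod_pow. apply pow_incr. split => //. apply Cmod_ge_0. Qed.

Lemma mono_bound n a b B : 1 <= B -> Cmod a <= B -> Cmod b <= B ->
  Cmod (mono n a b) <= INR n * B ^ n.
Proof. move=> HB Ha Hb. elim: n => [|k IH].
- simpl. rewrite Cmod_0. lra.
- rewrite S_INR. change (mono k.+1 a b) with (Cpow a k + b * mono k a b)%C. change (B ^ k.+1) with (B * B ^ k).
  apply: Rle_trans (Cmod_triangle _ _) _. rewrite Cmod_mult.
  have h1 := Cpow_bound a k B ltac:(lra) Ha.
  have h0 : 0 <= INR k := pos_INR k.
  have h2 : 1 <= B ^ k by apply pow_R1_Rle.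
  have h3 : Cmod b * Cmod (mono k a b) <= B * (INR k * B ^ k).
  { apply Rmult_le_compat => //; apply Cmod_ge_0. }
  nra. Qed.

Lemma Cpow_lip n a b B : 1 <= B -> Cmod a <= B -> Cmod b <= B ->
  Cmod (Cpow a n - Cpow b n)%C <= INR n * B ^ n * Cmod (a - b)%C.
Proof. move=> HB Ha Hb. rewrite mono_diff Cmod_mult.
have := mono_bound n a b B HB Ha Hb. have := Cmod_ge_0 (a - b)%C. nra. Qed.

Lemma mono_lip n a b a' b' B : 1 <= B -> Cmod a <= B -> Cmod b <= B ->
  Cmod a' <= B -> Cmod b' <= B ->
  Cmod (mono n a b - mono n a' b')%C <= INR n * INR n * B ^ n * (Cmod (a - a')%C + Cmod (b - b')%C).
Proof. move=> HB Ha Hb Ha' Hb'. elim: n => [|k IH].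
- simpl. have -> : (RtoC 0 - RtoC 0)%C = RtoC 0 by ring. rewrite Cmod_0. lra.
- rewrite S_INR. change (mono k.+1 a b) with (Cpow a k + b * mono k a b)%C.
  change (mono k.+1 a' b') with (Cpow a' k + b' * mono k a' b')%C. change (B ^ k.+1) with (B * B ^ k).
  have -> : (Cpow a k + b * mono k a b - (Cpow a' k + b' * mono k a' b'))%C =
    ((Cpow a k - Cpow a' k) + (b - b') * mono k a b + b' * (mono k a b - mono k a' b'))%C by ring.
  apply: Rle_trans (Cmod_triangle _ _) _.
  apply: Rle_trans (Rplus_le_compat_r _ _ _ (Cmod_triangle _ _)) _.
  rewrite !Cmod_mult.
  have h1 := Cpow_lip k a a' B HB Ha Ha'.
  have h2 := mono_bound k a b B HB Ha Hb.
  have h0 : 0 <= INR k := pos_INR k.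
  have hBk : 1 <= B ^ k by apply pow_R1_Rle.
  have e1 := Cmod_ge_0 (a - a')%C. have e2 := Cmod_ge_0 (b - b')%C.
  have e3 := Cmod_ge_0 b'. have e4 := Cmod_ge_0 (mono k a b - mono k a' b')%C.
  have e5 := Cmod_ge_0 (mono k a b).
  set S := Cmod (a - a')%C + Cmod (b - b')%C in IH *.
  set P := B ^ k in h1 h2 hBk IH *.
  have h3 : Cmod (b - b')%C * Cmod (mono k a b) <= Cmod (b - b')%C * (INR k * P) by apply Rmult_le_compat_l.
  have h4 : Cmod b' * Cmod (mono k a b - mono k a' b')%C <= B * (INR k * INR k * P * S).
  { apply Rmult_le_compat => //. }
  have : INR k * P * Cmod (a - a')%C + Cmod (b - b')%C * (INR k * P) <= INR k * P * S by rewrite /S; nra.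
  have hS : 0 <= S by rewrite /S; lra.
  have hkP : 0 <= INR k * P * S by apply Rmult_le_pos; [apply Rmult_le_pos|]; lra.
  have : INR k * P * S <= B * (INR k * P * S).
  { apply Rle_trans with (1 * (INR k * P * S)); [lra | apply Rmult_le_compat_r; lra]. }
  have hBPS : 0 <= B * P * S by apply Rmult_le_pos; [apply Rmult_le_pos|]; lra.
  have : 0 <= INR k * (B * P * S) by apply Rmult_le_pos.
  lra. Qed.

Section Sums.
Context {N : nat}.
Implicit Types (r : list 'I_N) (G H : 'I_N -> C).

Lemma bsum_plus r G H : \big[Cplus/RtoC 0]_(i <- r) (G i + H i)%C =
  (\big[Cplus/RtoC 0]_(i <- r) G i + \big[Cplus/RtoC 0]_(i <- r) H i)%C.
Proof. elim: r => [|a r IH]; rewrite ?big_nil ?big_cons; first ring. rewrite IH; ring. Qed.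

Lemma bsum_opp r G : \big[Cplus/RtoC 0]_(i <- r) (- G i)%C = (- \big[Cplus/RtoC 0]_(i <- r) G i)%C.
Proof. elim: r => [|a r IH]; rewrite ?big_nil ?big_cons; first ring. rewrite IH; ring. Qed.

Lemma bsum_minus r G H : \big[Cplus/RtoC 0]_(i <- r) (G i - H i)%C =
  (\big[Cplus/RtoC 0]_(i <- r) G i - \big[Cplus/RtoC 0]_(i <- r) H i)%C.
Proof. rewrite bsum_plus bsum_opp. done. Qed.

Lemma bsum_scal r c G : \big[Cplus/RtoC 0]_(i <- r) (c * G i)%C = (c * \big[Cplus/RtoC 0]_(i <- r) G i)%C.
Proof. elim: r => [|a r IH]; rewrite ?big_nil ?big_cons; first ring. rewrite IH; ring. Qed.

Lemma bsum_ext r G H : (forall i, G i = H i) -> \big[Cplus/RtoC 0]_(i <- r) G i = \big[Cplus/RtoC 0]_(i <- r) H i.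
Proof. move=> E. elim: r => [|a r IH]; rewrite ?big_nil ?big_cons //. by rewrite IH E. Qed.

Lemma bsum_Cmod r G : Cmod (\big[Cplus/RtoC 0]_(i <- r) G i) <= \big[Rplus/0]_(i <- r) Cmod (G i).
Proof. elim: r => [|a r IH]; rewrite ?big_nil ?big_cons; first (rewrite Cmod_0; lra).
apply: Rle_trans (Cmod_triangle _ _) _. lra. Qed.

Lemma rsum_le r (f g : 'I_N -> R) : (forall i, f i <= g i) ->
  \big[Rplus/0]_(i <- r) f i <= \big[Rplus/0]_(i <- r) g i.
Proof. move=> E. elim: r => [|a r IH]; rewrite ?big_nil ?big_cons; first lra. have := E a. lra. Qed.

Lemma rsum_ge0 r (f : 'I_N -> R) : (forall i, 0 <= f i) -> 0 <= \big[Rplus/0]_(i <- r) f i.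
Proof. move=> E. elim: r => [|a r IH]; rewrite ?big_nil ?big_cons; first lra. have := E a. lra. Qed.

Lemma rsum_scal r c (f : 'I_N -> R) : \big[Rplus/0]_(i <- r) (c * f i) = c * \big[Rplus/0]_(i <- r) f i.
Proof. elim: r => [|a r IH]; rewrite ?big_nil ?big_cons; first ring. rewrite IH; ring. Qed.

Lemma bsum_single_notin r (i : 'I_N) (v : 'I_N -> C) : i \notin r ->
  \big[Cplus/RtoC 0]_(j <- r) (if j == i then v j else RtoC 0) = RtoC 0.
Proof. elim: r => [|a r IH]; rewrite ?big_nil ?big_cons // in_cons negb_or => /andP [H1 H2].
rewrite IH // eq_sym (negbTE H1). ring. Qed.

Lemma bsum_single r (i : 'I_N) (v : 'I_N -> C) : uniq r -> i \in r ->
  \big[Cplus/RtoC 0]_(j <- r) (if j == i then v j else RtoC 0) = v i.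
Proof. elim: r => [|a r IH] //=. rewrite big_cons in_cons => /andP [Ha Hu] /orP [/eqP E|Hi].
- subst a. rewrite eqxx bsum_single_notin //. ring.
- have Hai : a != i. { apply/eqP => E; subst a. by rewrite Hi in Ha. }
  rewrite (negbTE Hai) IH //. ring. Qed.

End Sums.
Section PolyS.
Context {N : nat}.
Implicit Types (z w : CN N) (a : 'I_N -> C) (n : 'I_N -> nat).

Definition Pz a n z (t : C) : C := \big[Cplus/RtoC 0]_(i < N) (z i * (a i * Cpow t (n i)))%C.
Definition DD a n z (t1 t2 : C) : C := \big[Cplus/RtoC 0]_(i < N) (z i * (a i * mono (n i) t1 t2))%C.

Lemma Pz_diff a n z t1 t2 : (Pz a n z t1 - Pz a n z t2 = (t1 - t2) * DD a n z t1 t2)%C.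
Proof. rewrite /Pz /DD -bsum_minus -bsum_scal. apply bsum_ext => i.
have := mono_diff (n i) t1 t2. move=> E.
have -> : (z i * (a i * Cpow t1 (n i)) - z i * (a i * Cpow t2 (n i)) = z i * a i * (Cpow t1 (n i) - Cpow t2 (n i)))%C by ring.
rewrite E. ring. Qed.

Definition dirv (b : bool) : C := if b then Ci else RtoC 1.

Lemma Cmod_dirv b : Cmod (dirv b) = 1.
Proof. case: b => /=; [apply Cmod_Ci | apply Cmod_1]. Qed.

Lemma Pz_shift a n z i b h t :
  Pz a n (shift z i b h) t = (Pz a n z t + (RtoC h * dirv b) * (a i * Cpow t (n i)))%C.
Proof. rewrite /Pz /shift.
have -> : \big[Cplus/RtoC 0]_(j < N)
   ((if j == i then (z j + RtoC h * (if b then Ci else RtoC 1))%C else z j) * (a j * Cpow t (n j)))%C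
 = \big[Cplus/RtoC 0]_(j < N) ((z j * (a j * Cpow t (n j))) +
     (if j == i then (RtoC h * dirv b) * (a j * Cpow t (n j)) else RtoC 0))%C.
{ apply bsum_ext => j. case: (j == i); rewrite /dirv; ring. }
rewrite bsum_plus bsum_single //. by apply index_enum_uniq. by apply mem_index_enum. Qed.

Definition CNle z w d := forall j, Cmod (z j - w j)%C <= d.

Definition SA a n (B : R) : R := \big[Rplus/0]_(i < N) (Cmod (a i) * B ^ (n i)).

Lemma Pz_zlip a n z w t d B : 0 <= B -> Cmod t <= B -> CNle z w d ->
  Cmod (Pz a n z t - Pz a n w t)%C <= d * SA a n B.
Proof. move=> HB Ht Hd. rewrite /Pz /SA -bsum_minus -rsum_scal.
apply: Rle_trans (bsum_Cmod _ _) _. apply rsum_le => i.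
have -> : (z i * (a i * Cpow t (n i)) - w i * (a i * Cpow t (n i)) = (z i - w i) * a i * Cpow t (n i))%C by ring.
rewrite !Cmod_mult. have := Hd i. have := Cpow_bound t (n i) B HB Ht.
have := Cmod_ge_0 (z i - w i)%C. have := Cmod_ge_0 (a i). have := Cmod_ge_0 (Cpow t (n i)).
move=> h1 h2 h3 h4 h5.
apply Rle_trans with (Cmod (z i - w i)%C * Cmod (a i) * B ^ n i).
{ apply Rmult_le_compat_l => //. by apply Rmult_le_pos. }
have : Cmod (z i - w i)%C * (Cmod (a i) * B ^ n i) <= d * (Cmod (a i) * B ^ n i).
{ apply Rmult_le_compat_r => //. apply Rmult_le_pos => //. by apply pow_le. }
lra. Qed.

Definition KD a n z0 (B : R) : R :=
  \big[Rplus/0]_(i < N) (Cmod (a i) * (INR (n i) * B ^ (n i) + Cmod (z0 i) * (2 * (INR (n i) * INR (n i) * B ^ (n i))))).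

Lemma DD_cont a n z z0 t1 t2 c B e : 1 <= B -> Cmod t1 <= B -> Cmod t2 <= B -> Cmod c <= B ->
  CNle z z0 e -> Cmod (t1 - c)%C <= e -> Cmod (t2 - c)%C <= e ->
  Cmod (DD a n z t1 t2 - DD a n z0 c c)%C <= e * KD a n z0 B.
Proof. move=> HB H1 H2 Hc Hz He1 He2. rewrite /DD /KD -bsum_minus -rsum_scal.
apply: Rle_trans (bsum_Cmod _ _) _. apply rsum_le => i.
have -> : (z i * (a i * mono (n i) t1 t2) - z0 i * (a i * mono (n i) c c) =
   a i * ((z i - z0 i) * mono (n i) t1 t2 + z0 i * (mono (n i) t1 t2 - mono (n i) c c)))%C by ring.
rewrite Cmod_mult.
have hm := mono_bound (n i) t1 t2 B HB H1 H2.
have hl := mono_lip (n i) t1 t2 c c B HB H1 H2 Hc Hc.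
have hz := Hz i.
have g1 := Cmod_ge_0 (a i). have g2 := Cmod_ge_0 (z i - z0 i)%C. have g3 := Cmod_ge_0 (z0 i).
have g4 := Cmod_ge_0 (mono (n i) t1 t2). have g5 := Cmod_ge_0 (mono (n i) t1 t2 - mono (n i) c c)%C.
have g6 : 0 <= INR (n i) * B ^ n i. { apply Rmult_le_pos; [apply pos_INR | apply pow_le; lra]. }
have g7 : 0 <= INR (n i) * INR (n i) * B ^ n i. { apply Rmult_le_pos; [apply Rmult_le_pos; apply pos_INR | apply pow_le; lra]. }
have he : 0 <= e. { apply: Rle_trans He1. apply Cmod_ge_0. }
apply Rle_trans with (Cmod (a i) * (e * (INR (n i) * B ^ n i + Cmod (z0 i) * (2 * (INR (n i) * INR (n i) * B ^ n i))))); last (right; ring).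
apply Rmult_le_compat_l => //.
apply: Rle_trans (Cmod_triangle _ _) _. rewrite !Cmod_mult.
have k1 : Cmod (z i - z0 i)%C * Cmod (mono (n i) t1 t2) <= e * (INR (n i) * B ^ n i) by apply Rmult_le_compat.
have k2 : Cmod (z0 i) * Cmod (mono (n i) t1 t2 - mono (n i) c c)%C <= Cmod (z0 i) * (INR (n i) * INR (n i) * B ^ n i * (2 * e)).
{ apply Rmult_le_compat_l => //. apply: Rle_trans hl _. apply Rmult_le_compat_l => //. lra. }
have : Cmod (z0 i) * (INR (n i) * INR (n i) * B ^ n i * (2 * e)) = e * (Cmod (z0 i) * (2 * (INR (n i) * INR (n i) * B ^ n i))) by ring.
lra. Qed.

End PolyS.

Lemma Cmod_le_sum (z : C) : Cmod z <= Rabs (fst z) + Rabs (snd z).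
Proof. rewrite /Cmod. rewrite -(sqrt_pow2 (Rabs (fst z) + Rabs (snd z))); last (have := Rabs_pos (fst z); have := Rabs_pos (snd z); lra).
apply sqrt_le_1_alt. have := Rabs_pos (fst z). have := Rabs_pos (snd z).
rewrite -(pow2_abs (fst z)) -(pow2_abs (snd z)). nra. Qed.

Lemma Cmod_lt_all (x : C) : (forall e, 0 < e -> Cmod x < e) -> x = RtoC 0.
Proof. move=> H. case: (Req_dec (Cmod x) 0) => E. by apply Cmod_eq_0.
have := Cmod_ge_0 x => h. have := H (Cmod x) ltac:(lra). lra. Qed.

Lemma half_pow_pos k : 0 < (/2) ^ k.
Proof. apply pow_lt. lra. Qed.

Lemma contraction (G : C -> C) (c : C) (rho : R) : 0 < rho ->
  (forall a b, Cmod (a - c)%C <= rho -> Cmod (b - c)%C <= rho -> Cmod (G a - G b)%C <= Cmod (a - b)%C / 2) ->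
  Cmod (G c - c)%C <= rho / 2 ->
  exists a, Cmod (a - c)%C <= rho /\ G a = a.
Proof. move=> Hr HG H0.
set t := fun k => Nat.iter k G c.
have tS : forall k, t (S k) = G (t k) by [].
have Hk : forall k, Cmod (t (S k) - t k)%C <= rho / 2 * (/2) ^ k /\ Cmod (t k - c)%C <= rho * (1 - (/2)^k).
{ elim=> [|k [IH1 IH2]].
  - split; first by (simpl; lra). simpl. have -> : (c - c)%C = RtoC 0 by ring. rewrite Cmod_0. lra.
  - have hp := half_pow_pos k.
    have Hk1 : Cmod (t (S k) - c)%C <= rho * (1 - (/2)^(S k)).
    { apply: Rle_trans (Cmod_sub_tri _ (t k) _) _. simpl pow. lra. }
    split => //.
    rewrite tS (tS k). apply: Rle_trans (HG _ _ _ _) _.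
    + apply: Rle_trans Hk1 _. have := half_pow_pos (S k). nra.
    + apply: Rle_trans IH2 _. nra.
    + rewrite -tS. simpl pow. lra. }
have Hin : forall k, Cmod (t k - c)%C <= rho.
{ move=> k. case: (Hk k) => _ h. have := half_pow_pos k. nra. }
have Hcauchy : forall n j, Cmod (t (n + j)%coq_nat - t n)%C <= rho * ((/2)^n - (/2)^(n+j)%coq_nat).
{ move=> n. elim=> [|j IH].
  - rewrite Nat.add_0_r. have -> : (t n - t n)%C = RtoC 0 by ring. rewrite Cmod_0. lra.
  - rewrite Nat.add_succ_r. apply: Rle_trans (Cmod_sub_tri _ (t (n + j)%coq_nat) _) _.
    case: (Hk (n + j)%coq_nat) => h1 _. simpl pow. lra. }
have Hcauchy' : forall e, 0 < e -> exists M, forall n m, (n >= M)%coq_nat -> (m >= M)%coq_nat -> Cmod (t n - t m)%C < e.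
{ move=> e he. have [M HM] : exists M, forall n, (n >= M)%coq_nat -> Rabs ((/2)^n) < e / (rho + 1).
  { apply pow_lt_1_zero. rewrite Rabs_pos_eq; lra. apply Rdiv_lt_0_compat; lra. }
  exists M => n m Hn Hm.
  have key : forall n m, (n >= M)%coq_nat -> (m >= n)%coq_nat -> Cmod (t m - t n)%C < e.
  { move=> n' m' Hn' Hm'. have -> : m' = (n' + Nat.sub m' n')%coq_nat by lia.
    apply: Rle_lt_trans (Hcauchy _ _) _.
    have := HM n' Hn'. rewrite Rabs_pos_eq; last (have := half_pow_pos n'; lra).
    have := half_pow_pos (n' + Nat.sub m' n')%coq_nat. move=> h1 h2.
    have : rho * (/2)^n' < rho * (e / (rho + 1)) by apply Rmult_lt_compat_l.
    have : rho * (e / (rho + 1)) < e.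
    { apply (Rmult_lt_reg_r (rho + 1)); first lra. field_simplify; lra. }
    nra. }
  case: (Nat.le_gt_cases n m) => Hnm.
  - have -> : (t n - t m)%C = (- (t m - t n))%C by ring. rewrite Cmod_opp. apply key => //.
  - apply key => //. lia. }
have Cre : Cauchy_crit (fun k => fst (t k)).
{ move=> e he. have [M HM] := Hcauchy' e he. exists M => n m Hn Hm. rewrite /Rdist.
  apply: Rle_lt_trans _ (HM n m Hn Hm). have := re_le_Cmod (t n - t m)%C. by rewrite /Re /=. }
have Cim : Cauchy_crit (fun k => snd (t k)).
{ move=> e he. have [M HM] := Hcauchy' e he. exists M => n m Hn Hm. rewrite /Rdist.
  apply: Rle_lt_trans _ (HM n m Hn Hm). have := Rmax_Cmod (t n - t m)%C. move=> h.
  apply: Rle_trans _ h. apply Rmax_r. }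
have [l1 Hl1] := Rcomplete.R_complete _ Cre.
have [l2 Hl2] := Rcomplete.R_complete _ Cim.
set ts : C := (l1, l2).
have Hconv : forall e, 0 < e -> exists M, forall n, (n >= M)%coq_nat -> Cmod (t n - ts)%C < e.
{ move=> e he. have [M1 HM1] := Hl1 (e/2) ltac:(lra). have [M2 HM2] := Hl2 (e/2) ltac:(lra).
  exists (M1 + M2)%coq_nat => n Hn. apply: Rle_lt_trans (Cmod_le_sum _) _.
  move: (HM1 n ltac:(lia)) (HM2 n ltac:(lia)). rewrite /Rdist /= /Rminus. lra. }
have Hts : Cmod (ts - c)%C <= rho.
{ apply Rnot_lt_le => Hlt. have [M HM] := Hconv (Cmod (ts - c)%C - rho) ltac:(lra).
  have := Cmod_sub_tri ts (t M) c. have := HM M (le_n M). have := Hin M.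
  have -> : (ts - t M)%C = (- (t M - ts))%C by ring. rewrite Cmod_opp. lra. }
exists ts; split => //.
have : (G ts - ts)%C = RtoC 0.
{ apply Cmod_lt_all => e he. have [M HM] := Hconv (e/2) ltac:(lra).
  apply: Rle_lt_trans (Cmod_sub_tri _ (G (t M)) _) _.
  have h1 := HG ts (t M) Hts (Hin M).
  have h2 := HM (S M) ltac:(lia). rewrite tS in h2.
  have h3 := HM M (le_n M).
  replace (ts - t M)%C with (- (t M - ts))%C in h1 by ring. rewrite Cmod_opp in h1. lra. }
move=> E. have -> : G ts = ((G ts - ts) + ts)%C by ring. rewrite E. ring. Qed.

Notation CV := (AbsRing_NormedModule C_AbsRing).

Lemma conv2 (f : C -> C) z l : @is_derive C_AbsRing CV f z l -> @is_derive C_AbsRing C_NormedModule f z l.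
Proof. intros [[a b [M HM]] Hd]. split. split. exact a. exact b. exists M. exact HM. intros x Hx eps. exact (Hd x Hx eps). Qed.

Lemma dval (f : C -> C) z l l' : @is_derive C_AbsRing CV f z l -> l = l' -> @is_derive C_AbsRing CV f z l'.
Proof. by move=> H <-. Qed.

Lemma is_derive_Cpow n (y : C) :
  @is_derive C_AbsRing CV (fun w => Cpow w n) y (RtoC (INR n) * Cpow y (Nat.pred n))%C.
Proof. elim: n => [|k IH].
- apply: dval. apply: (@is_derive_const C_AbsRing CV (RtoC 1) y).
  simpl. apply injective_projections; simpl; ring.
- apply: dval. apply: (@is_derive_mult C_AbsRing (fun w => w) (fun w => Cpow w k) y _ _ (@is_derive_id C_AbsRing y) IH Cmult_comm).
  change (Cplus (Cmult (RtoC 1) (Cpow y k)) (Cmult y (RtoC (INR k) * Cpow y (Nat.pred k))%C) = (RtoC (INR k.+1) * Cpow y k)%C).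
  rewrite mono_aux RtoC_INRS. ring. Qed.

Lemma is_derive_bsum N (r : list 'I_N) (G : 'I_N -> C -> C) (D : 'I_N -> C) (y : C) :
  (forall i, @is_derive C_AbsRing CV (G i) y (D i)) ->
  @is_derive C_AbsRing CV (fun w => \big[Cplus/RtoC 0]_(i <- r) G i w) y (\big[Cplus/RtoC 0]_(i <- r) D i).
Proof. move=> HD. elim: r => [|a r IH].
- apply: (@is_derive_ext C_AbsRing CV (fun _ => RtoC 0)). move=> w. by rewrite big_nil.
  rewrite big_nil. apply: dval. apply: (@is_derive_const C_AbsRing CV (RtoC 0) y).
  simpl. apply injective_projections; simpl; ring.
- apply: (@is_derive_ext C_AbsRing CV (fun w => plus (G a w) (\big[Cplus/RtoC 0]_(i <- r) G i w))).
  move=> w. by rewrite big_cons.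
  rewrite big_cons. exact: is_derive_plus (HD a) IH. Qed.

Lemma is_derive_cmul (c : C) (f : C -> C) y l : @is_derive C_AbsRing CV f y l ->
  @is_derive C_AbsRing CV (fun w => c * f w)%C y (c * l)%C.
Proof. move=> H. apply: dval. apply: (@is_derive_mult C_AbsRing (fun _ => c) f y _ _ (@is_derive_const C_AbsRing CV c y) H Cmult_comm).
change (Cplus (Cmult (RtoC 0) (f y)) (Cmult c l) = Cmult c l). ring. Qed.

Lemma dyF_eq N (s : 'I_N -> nat) z y x :
  dyF s z y x = (1 - \big[Cplus/RtoC 0]_(i < N) (z i * (Cpow x (s i) * (RtoC (INR (s i)) * Cpow y (Nat.pred (s i))))))%C.
Proof. rewrite /dyF. apply is_C_derive_unique. apply conv2. rewrite /F.
apply: dval. apply: (@is_derive_minus C_AbsRing CV).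
apply: (@is_derive_minus C_AbsRing CV). apply: (@is_derive_id C_AbsRing). apply: (@is_derive_const C_AbsRing CV).
apply: is_derive_bsum => i. apply: is_derive_cmul. apply: is_derive_cmul. apply: is_derive_Cpow.
set S := \big[Cplus/RtoC 0]_(i < N) _.
change (Cminus (Cminus (RtoC 1) (RtoC 0)) S = Cminus (RtoC 1) S). ring. Qed.

Lemma dyyF_eq N (s : 'I_N -> nat) z y x :
  dyyF s z y x = (- \big[Cplus/RtoC 0]_(i < N) (z i * (Cpow x (s i) * (RtoC (INR (s i)) * (RtoC (INR (Nat.pred (s i))) * Cpow y (Nat.pred (Nat.pred (s i))))))))%C.
Proof. rewrite /dyyF.
have -> : (fun w => dyF s z w x) = (fun w => (1 - \big[Cplus/RtoC 0]_(i < N) (z i * (Cpow x (s i) * (RtoC (INR (s i)) * Cpow w (Nat.pred (s i))))))%C).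
{ apply FunctionalExtensionality.functional_extensionality => w. apply dyF_eq. }
apply is_C_derive_unique. apply conv2.
apply: dval. apply: (@is_derive_minus C_AbsRing CV). apply: (@is_derive_const C_AbsRing CV).
apply: is_derive_bsum => i. apply: is_derive_cmul. apply: is_derive_cmul. apply: is_derive_cmul. apply: is_derive_Cpow.
set S := \big[Cplus/RtoC 0]_(i < N) _.
change (Cminus (RtoC 0) S = Copp S). ring. Qed.

Section Alg.
Context {N : nat} (s : 'I_N -> nat).

Definition aH (i : 'I_N) : C := RtoC (INR (s i) - 1).
Definition ag (i : 'I_N) : C := RtoC 1.
Definition a1 (i : 'I_N) : C := RtoC (INR (s i)).
Definition n1 (i : 'I_N) : nat := Nat.pred (s i).
Definition Hf (z : CN N) (t : C) : C := (Pz aH s z t - 1)%C.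
Definition gP (z : CN N) (t : C) : C := Pz ag s z t.
Definition P1 (z : CN N) (t : C) : C := Pz a1 n1 z t.

Lemma RtoC_minus (a b : R) : RtoC (a - b) = (RtoC a - RtoC b)%C.
Proof. apply injective_projections; simpl; ring. Qed.

Lemma F_eq z y x : F s z y x = (y - 1 - gP z (x * y))%C.
Proof. rewrite /F /gP /Pz. f_equal. apply bsum_ext => i. rewrite /ag Cpow_mult_l. ring. Qed.

Lemma dyF_eq2 z y x : (forall i, (1 <= s i)%coq_nat) -> dyF s z y x = (1 - x * P1 z (x * y))%C.
Proof. move=> Hs. rewrite dyF_eq /P1 /Pz -bsum_scal. f_equal. apply bsum_ext => i.
rewrite /a1 /n1. have : (1 <= s i)%coq_nat := Hs i. case: (s i) => [|k] Hk; first lia.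
have -> : Nat.pred k.+1 = k by []. rewrite !Cpow_mult_l Cpow_S. ring. Qed.

Lemma dyyF_rel z y x : (forall i, (2 <= s i)%coq_nat) ->
  (y * y * dyyF s z y x = - (x * y) * DD aH s z (x * y) (x * y))%C.
Proof. move=> Hs. rewrite dyyF_eq /DD.
have E : \big[Cplus/RtoC 0]_(i < N) (y * y * (z i * (Cpow x (s i) * (RtoC (INR (s i)) * (RtoC (INR (Nat.pred (s i))) * Cpow y (Nat.pred (Nat.pred (s i))))))))%C
   = \big[Cplus/RtoC 0]_(i < N) ((x * y) * (z i * (aH i * mono (s i) (x * y) (x * y))))%C.
{ apply bsum_ext => i. rewrite /aH mono_diag. have : (2 <= s i)%coq_nat := Hs i. case: (s i) => [|[|k]] Hk; try lia.
  have -> : Nat.pred k.+2 = k.+1 by []. have -> : Nat.pred k.+1 = k by [].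
  rewrite Cpow_mult_l !Cpow_S RtoC_minus !RtoC_INRS. ring. }
rewrite !bsum_scal in E.
transitivity (- ((x * y) * \big[Cplus/RtoC 0]_(i < N) (z i * (aH i * mono (s i) (x * y) (x * y)))))%C; last ring.
rewrite -E. have K : forall a b : C, (a * - b = - (a * b))%C by move=> a b; ring. exact: K _ _. Qed.

Lemma H_eq z t : (forall i, (1 <= s i)%coq_nat) -> Pz aH s z t = (t * P1 z t - gP z t)%C.
Proof. move=> Hs. rewrite /P1 /gP /Pz -bsum_scal -bsum_minus. apply bsum_ext => i.
rewrite /aH /ag /a1 /n1. have : (1 <= s i)%coq_nat := Hs i. case: (s i) => [|k] Hk; first lia.
have -> : Nat.pred k.+1 = k by []. rewrite Cpow_S RtoC_minus RtoC_INRS. ring. Qed.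

End Alg.

Section PolyB.
Context {N : nat}.
Implicit Types (z w : CN N) (a : 'I_N -> C) (n : 'I_N -> nat).

Definition KDD a n z0 (B : R) : R := \big[Rplus/0]_(i < N) (Cmod (z0 i) * (Cmod (a i) * (INR (n i) * B ^ (n i)))).
Definition KP a n z0 B := SA a n B + KDD a n z0 B.

Lemma DD_bound a n z0 t c B : 1 <= B -> Cmod t <= B -> Cmod c <= B -> Cmod (DD a n z0 t c) <= KDD a n z0 B.
Proof. move=> HB Ht Hc. rewrite /DD /KDD. apply: Rle_trans (bsum_Cmod _ _) _. apply rsum_le => i.
rewrite !Cmod_mult. have := mono_bound (n i) t c B HB Ht Hc.
have := Cmod_ge_0 (z0 i). have := Cmod_ge_0 (a i). move=> h1 h2 h3.
apply Rmult_le_compat_l => //. apply Rmult_le_compat_l => //. Qed.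

Lemma SA_ge0 a n B : 0 <= B -> 0 <= SA a n B.
Proof. move=> HB. apply rsum_ge0 => i. apply Rmult_le_pos; [apply Cmod_ge_0 | apply pow_le; lra]. Qed.

Lemma KDD_ge0 a n z0 B : 0 <= B -> 0 <= KDD a n z0 B.
Proof. move=> HB. apply rsum_ge0 => i. apply Rmult_le_pos; [apply Cmod_ge_0|]. apply Rmult_le_pos; [apply Cmod_ge_0|].
apply Rmult_le_pos; [apply pos_INR | apply pow_le; lra]. Qed.

Lemma KD_ge0 a n z0 B : 0 <= B -> 0 <= KD a n z0 B.
Proof. move=> HB. apply rsum_ge0 => i. apply Rmult_le_pos; [apply Cmod_ge_0|].
have := pos_INR (n i). have := pow_le B (n i) HB. have := Cmod_ge_0 (z0 i). move=> h1 h2 h3.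
apply Rplus_le_le_0_compat. by apply Rmult_le_pos. apply Rmult_le_pos => //. apply Rmult_le_pos; first lra.
apply Rmult_le_pos => //. by apply Rmult_le_pos. Qed.

Lemma KP_ge0 a n z0 B : 0 <= B -> 0 <= KP a n z0 B.
Proof. move=> HB. rewrite /KP. have := SA_ge0 a n B HB. have := KDD_ge0 a n z0 B HB. lra. Qed.

Lemma CNle_sym z w d : CNle z w d -> CNle w z d.
Proof. move=> H j. have := H j. have -> : (z j - w j)%C = (- (w j - z j))%C by ring. by rewrite Cmod_opp. Qed.

Lemma CNle_refl z d : 0 <= d -> CNle z z d.
Proof. move=> Hd j. have -> : (z j - z j)%C = RtoC 0 by ring. by rewrite Cmod_0. Qed.

Lemma CNle_mon z w d d' : d <= d' -> CNle z w d -> CNle z w d'.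
Proof. move=> Hd H j. have := H j. lra. Qed.

Lemma CNle_ge0 z w d : CNle z w d -> (0 < N)%coq_nat -> 0 <= d.
Proof. move=> H HN. have := H (Ordinal (introT ltP HN)). have := Cmod_ge_0 (z (Ordinal (introT ltP HN)) - w (Ordinal (introT ltP HN)))%C. lra. Qed.

Lemma Pz_cont a n z z0 t c B e : 1 <= B -> Cmod t <= B -> Cmod c <= B ->
  CNle z z0 e -> Cmod (t - c)%C <= e -> Cmod (Pz a n z t - Pz a n z0 c)%C <= e * KP a n z0 B.
Proof. move=> HB Ht Hc Hz He.
have -> : (Pz a n z t - Pz a n z0 c = (Pz a n z t - Pz a n z0 t) + (Pz a n z0 t - Pz a n z0 c))%C by ring.
rewrite Pz_diff. apply: Rle_trans (Cmod_triangle _ _) _. rewrite Cmod_mult /KP Rmult_plus_distr_l.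
apply Rplus_le_compat. apply: Pz_zlip => //; lra.
have := DD_bound a n z0 t c B HB Ht Hc. have := KDD_ge0 a n z0 B ltac:(lra). have := Cmod_ge_0 (t - c)%C.
have := Cmod_ge_0 (DD a n z0 t c). move=> h1 h2 h3 h4. by apply Rmult_le_compat. Qed.

End PolyB.

Definition Fh : (R -> Prop) -> Prop := fun P => exists d, 0 < d /\ forall h, 0 < Rabs h < d -> P h.

Lemma Fh_filter : Filter Fh.
Proof. split.
- exists 1. split; [lra|done].
- move=> P Q [d1 [h1 H1]] [d2 [h2 H2]]. exists (Rmin d1 d2). split; first by apply Rmin_pos.
  move=> h [a b]. split; [apply H1 | apply H2]; split => //; apply: Rlt_le_trans b _; [apply Rmin_l | apply Rmin_r].
- move=> P Q HPQ [d [hd H]]. exists d. split => // h Hh. by apply HPQ, H. Qed.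

Definition Fz {N} (O : CN N -> Prop) (z0 : CN N) : (CN N -> Prop) -> Prop :=
  fun P => exists d, 0 < d /\ forall w, O w -> CN_ball z0 d w -> P w.

Lemma Fz_filter {N} (O : CN N -> Prop) z0 : Filter (Fz O z0).
Proof. split.
- exists 1. split; [lra|done].
- move=> P Q [d1 [h1 H1]] [d2 [h2 H2]]. exists (Rmin d1 d2). split; first by apply Rmin_pos.
  move=> w Ow Hw. split; [apply H1 | apply H2] => // j; apply: Rlt_le_trans (Hw j) _; [apply Rmin_l | apply Rmin_r].
- move=> P Q HPQ [d [hd H]]. exists d. split => // w Ow Hw. by apply HPQ, H. Qed.

Lemma normC (x : C) : @norm R_AbsRing C_R_NormedModule x = Cmod x.
Proof. unfold norm. simpl. unfold prod_norm, Cmod. simpl. change (@norm R_AbsRing R_NormedModule (fst x)) with (Rabs (fst x)).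
change (@norm R_AbsRing R_NormedModule (snd x)) with (Rabs (snd x)).
f_equal. rewrite !Rmult_1_r. rewrite -!Rabs_mult !Rabs_right //; apply Rle_ge; apply Rle_0_sqr. Qed.


Lemma Clim_is_derive (f : R -> C) (l : C) :
  Clim Fh (fun h => ((f h - f 0) / RtoC h)%C) l -> @is_derive R_AbsRing C_R_NormedModule f 0 l.
Proof. move=> Hc. split.
- apply is_linear_scal_l.
- move=> x Hx. have E := is_filter_lim_locally_unique _ _ Hx. subst x.
  move=> eps. have [d [hd Hd]] := Hc eps (cond_pos eps).
  exists (mkposreal d hd) => y Hy.
  rewrite !normC.
  set S := (scal _ _).
  have HS : S = (RtoC (y - 0) * l)%C.
  { rewrite /S. apply injective_projections; rewrite /= /scal /= /mult /= /minus /plus /opp /=; ring. }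
  change (Cmod (Cminus (Cminus (f y) (f 0)) S) <= eps * Rabs (y - 0)). rewrite HS.
  have Hy' : Rabs y < d. { move: Hy. rewrite /ball /= /AbsRing_ball /abs /= /minus /plus /opp /=. by rewrite Ropp_0 Rplus_0_r. }
  rewrite Rminus_0_r.
  case: (Req_dec y 0) => [->|Hy0].
  + have -> : (f 0 - f 0 - RtoC 0 * l)%C = RtoC 0 by ring. rewrite Cmod_0 Rabs_R0. lra.
  + have hy : 0 < Rabs y by apply Rabs_pos_lt.
    have hyC : RtoC y <> RtoC 0. { move=> E; apply Hy0. by case: E. }
    have := Hd y (conj hy Hy'). move=> H.
    have -> : (f y - f 0 - RtoC y * l)%C = (RtoC y * ((f y - f 0) / RtoC y - l))%C by field.
    rewrite Cmod_mult Cmod_R. rewrite Rmult_comm. apply Rmult_le_compat_r; first lra. lra. Qed.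

Section Core.
Context {N : nat} (s : 'I_N -> nat) (zc : CN N) (tc : C).

Definition Bc := Cmod tc + 1.
Definition Ac := DD (aH s) s zc tc tc.
Definition P1c := P1 s zc tc.
Definition KH := KD (aH s) s zc Bc.
Definition K1 := KP (a1 s) (n1 s) zc Bc.
Definition M0 := SA (aH s) s Bc.
Definition eta := Rmin 1 (Rmin (Cmod Ac / (4 * (KH + 1))) (Cmod P1c / (4 * (K1 + 1)))).
Definition rr := Rmin eta (Cmod Ac * eta / (8 * (M0 + 1))).

Lemma Bc_ge1 : 1 <= Bc.
Proof. rewrite /Bc. have := Cmod_ge_0 tc. lra. Qed.

Lemma in_Bc t : Cmod (t - tc)%C <= 1 -> Cmod t <= Bc.
Proof. move=> H. rewrite /Bc. have := Cmod_triangle (t - tc)%C tc.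
have -> : (t - tc + tc)%C = t by ring. lra. Qed.

Lemma KH_ge0 : 0 <= KH. Proof. apply KD_ge0. have := Bc_ge1. lra. Qed.
Lemma K1_ge0 : 0 <= K1. Proof. apply KP_ge0. have := Bc_ge1. lra. Qed.
Lemma M0_ge0 : 0 <= M0. Proof. apply SA_ge0. have := Bc_ge1. lra. Qed.

Section WithHyp.
Variable (HA : Ac <> RtoC 0) (HP : P1c <> RtoC 0).

Lemma Ac_pos : 0 < Cmod Ac. Proof. by apply/Cmod_gt_0. Qed.
Lemma P1c_pos : 0 < Cmod P1c. Proof. by apply/Cmod_gt_0. Qed.

Lemma eta_pos : 0 < eta.
Proof. rewrite /eta. have := KH_ge0. have := K1_ge0. have := Ac_pos. have := P1c_pos. move=> h1 h2 h3 h4.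
apply Rmin_pos; first lra. apply Rmin_pos; apply Rdiv_lt_0_compat; lra. Qed.

Lemma eta_le1 : eta <= 1. Proof. apply Rmin_l. Qed.

Lemma eta_KH : eta * KH <= Cmod Ac / 4.
Proof. have h : eta <= Cmod Ac / (4 * (KH + 1)). { rewrite /eta. apply: Rle_trans (Rmin_r _ _) _. apply Rmin_l. }
have := KH_ge0. have := Ac_pos. move=> h1 h2.
apply Rle_trans with (Cmod Ac / (4 * (KH + 1)) * KH). by apply Rmult_le_compat_r.
apply (Rmult_le_reg_r (4 * (KH + 1))). lra. field_simplify; nra. Qed.

Lemma eta_K1 : eta * K1 <= Cmod P1c / 4.
Proof. have h : eta <= Cmod P1c / (4 * (K1 + 1)). { rewrite /eta. apply: Rle_trans (Rmin_r _ _) _. apply Rmin_r. }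
have := K1_ge0. have := P1c_pos. move=> h1 h2.
apply Rle_trans with (Cmod P1c / (4 * (K1 + 1)) * K1). by apply Rmult_le_compat_r.
apply (Rmult_le_reg_r (4 * (K1 + 1))). lra. field_simplify; nra. Qed.

Lemma rr_pos : 0 < rr.
Proof. rewrite /rr. have := eta_pos. have := Ac_pos. have := M0_ge0. move=> h1 h2 h3.
apply Rmin_pos => //. apply Rdiv_lt_0_compat; last lra. by apply Rmult_lt_0_compat. Qed.

Lemma rr_le_eta : rr <= eta. Proof. apply Rmin_l. Qed.

Lemma rr_M0 : rr * M0 <= Cmod Ac * eta / 8.
Proof. have h : rr <= Cmod Ac * eta / (8 * (M0 + 1)) by apply Rmin_r.
have := M0_ge0. have := Ac_pos. have := eta_pos. move=> h1 h2 h3.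
have h4 : 0 < Cmod Ac * eta by apply Rmult_lt_0_compat.
apply Rle_trans with (Cmod Ac * eta / (8 * (M0 + 1)) * M0). by apply Rmult_le_compat_r.
apply (Rmult_le_reg_r (8 * (M0 + 1))). lra. field_simplify; nra. Qed.

Lemma DD_near z t1 t2 : CNle z zc eta -> Cmod (t1 - tc)%C <= eta -> Cmod (t2 - tc)%C <= eta ->
  Cmod (DD (aH s) s z t1 t2 - Ac)%C <= Cmod Ac / 4.
Proof. move=> Hz H1 H2. have := eta_le1 => he.
apply: Rle_trans (DD_cont _ _ _ _ _ _ _ Bc eta Bc_ge1 _ _ _ Hz H1 H2) _.
- apply in_Bc; lra. - apply in_Bc; lra. - apply in_Bc. have -> : (tc - tc)%C = RtoC 0 by ring. rewrite Cmod_0; lra.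
- apply eta_KH. Qed.

Lemma DD_near_lb z t1 t2 : CNle z zc eta -> Cmod (t1 - tc)%C <= eta -> Cmod (t2 - tc)%C <= eta ->
  Cmod Ac / 2 <= Cmod (DD (aH s) s z t1 t2).
Proof. move=> Hz H1 H2. have := DD_near z t1 t2 Hz H1 H2. have := Cmod_rev Ac (DD (aH s) s z t1 t2).
have -> : (Ac - DD (aH s) s z t1 t2)%C = (- (DD (aH s) s z t1 t2 - Ac))%C by ring. rewrite Cmod_opp.
have := Ac_pos. lra. Qed.

Lemma P1_near z t : CNle z zc eta -> Cmod (t - tc)%C <= eta -> Cmod (P1 s z t - P1c)%C <= Cmod P1c / 4.
Proof. move=> Hz Ht. have := eta_le1 => he. rewrite /P1c /P1.
apply: Rle_trans (Pz_cont _ _ _ _ _ _ Bc eta Bc_ge1 _ _ Hz Ht) _.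
- apply in_Bc; lra. - apply in_Bc. have -> : (tc - tc)%C = RtoC 0 by ring. rewrite Cmod_0; lra.
- apply eta_K1. Qed.

Lemma P1_near_ne0 z t : CNle z zc eta -> Cmod (t - tc)%C <= eta -> P1 s z t <> RtoC 0.
Proof. move=> Hz Ht E. have := P1_near z t Hz Ht. rewrite E.
have -> : (RtoC 0 - P1c)%C = (- P1c)%C by ring. rewrite Cmod_opp. have := P1c_pos. lra. Qed.

Lemma root_lip z w d u v : CNle z zc eta -> CNle w zc eta -> CNle z w d ->
  Cmod (u - tc)%C <= eta -> Cmod (v - tc)%C <= eta -> Hf s z u = RtoC 0 -> Hf s w v = RtoC 0 ->
  Cmod (u - v)%C <= 2 * d * M0 / Cmod Ac.
Proof. move=> Hz Hw Hd Hu Hv Ezu Ewv. have := eta_le1 => he.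
have E : ((u - v) * DD (aH s) s w u v = Pz (aH s) s w u - Pz (aH s) s z u)%C.
{ rewrite -Pz_diff. rewrite /Hf in Ezu Ewv.
  have -> : Pz (aH s) s w v = RtoC 1 by (have -> : Pz (aH s) s w v = ((Pz (aH s) s w v - 1) + 1)%C by ring); rewrite Ewv; ring.
  have -> : Pz (aH s) s z u = RtoC 1 by (have -> : Pz (aH s) s z u = ((Pz (aH s) s z u - 1) + 1)%C by ring); rewrite Ezu; ring.
  done. }
have Hb : Cmod (Pz (aH s) s w u - Pz (aH s) s z u)%C <= d * M0.
{ apply: Pz_zlip. have := Bc_ge1; lra. apply in_Bc; lra. by apply CNle_sym. }
rewrite -E Cmod_mult in Hb.
have hl := DD_near_lb w u v Hw Hu Hv. have := Ac_pos => hA.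
have hg := Cmod_ge_0 (u - v)%C.
apply (Rmult_le_reg_r (Cmod Ac / 2)). lra.
have -> : 2 * d * M0 / Cmod Ac * (Cmod Ac / 2) = d * M0 by field; lra.
apply: Rle_trans Hb. by apply Rmult_le_compat_l. Qed.

Variable (H0 : Hf s zc tc = RtoC 0).

Lemma root_exists z : CNle z zc rr -> exists t, Cmod (t - tc)%C <= eta /\ Hf s z t = RtoC 0.
Proof. move=> Hz. have Hz' : CNle z zc eta by apply: CNle_mon rr_le_eta Hz.
have hA := Ac_pos. have he := eta_pos.
pose G := fun t => (t - Hf s z t / Ac)%C.
have [a [Ha Ga]] : exists a, Cmod (a - tc)%C <= eta /\ G a = a.
{ apply contraction => //.
  - move=> a b Ha Hb.
    have -> : (G a - G b = (a - b) * ((Ac - DD (aH s) s z a b) / Ac))%C.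
    { rewrite /G /Hf. have := Pz_diff (aH s) s z a b. move=> E.
      have -> : ((a - (Pz (aH s) s z a - 1) / Ac) - (b - (Pz (aH s) s z b - 1) / Ac) = (a - b) - (Pz (aH s) s z a - Pz (aH s) s z b) / Ac)%C by field.
      rewrite E. field. done. }
    rewrite Cmod_mult Cmod_div //.
    have h1 := DD_near z a b Hz' Ha Hb.
    have -> : (Ac - DD (aH s) s z a b)%C = (- (DD (aH s) s z a b - Ac))%C by ring. rewrite Cmod_opp.
    have h2 := Cmod_ge_0 (a - b)%C.
    have : Cmod (DD (aH s) s z a b - Ac)%C / Cmod Ac <= 1/4.
    { apply (Rmult_le_reg_r (Cmod Ac)) => //. field_simplify; lra. }
    nra.
  - rewrite /G. have -> : (tc - Hf s z tc / Ac - tc = - (Hf s z tc / Ac))%C by ring.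
    rewrite Cmod_opp Cmod_div //.
    have -> : Hf s z tc = (Pz (aH s) s z tc - Pz (aH s) s zc tc)%C.
    { have H0' := H0. rewrite /Hf in H0' *. have -> : Pz (aH s) s zc tc = ((Pz (aH s) s zc tc - 1) + 1)%C by ring. rewrite H0'. ring. }
    have hb : Cmod (Pz (aH s) s z tc - Pz (aH s) s zc tc)%C <= rr * M0.
    { apply: Pz_zlip => //. have := Bc_ge1; lra. apply in_Bc. have -> : (tc - tc)%C = RtoC 0 by ring. rewrite Cmod_0; lra. }
    have := rr_M0.
    move=> h. apply (Rmult_le_reg_r (Cmod Ac)) => //. field_simplify; try lra. nra. }
exists a. split => //. rewrite /G in Ga.
have : (Hf s z a / Ac = RtoC 0)%C. { have -> : (Hf s z a / Ac = a - (a - Hf s z a / Ac))%C by ring. rewrite Ga. ring. }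
move=> E. have -> : Hf s z a = ((Hf s z a / Ac) * Ac)%C by field. rewrite E. ring. Qed.

Definition troot (z : CN N) : C :=
  epsilon (inhabits (RtoC 0)) (fun t => Cmod (t - tc)%C <= eta /\ Hf s z t = RtoC 0).

Lemma troot_spec z : CNle z zc rr -> Cmod (troot z - tc)%C <= eta /\ Hf s z (troot z) = RtoC 0.
Proof. move=> Hz. rewrite /troot. apply epsilon_spec. by apply root_exists. Qed.

Lemma troot_close z : CNle z zc rr -> Cmod (troot z - tc)%C <= eta / 4.
Proof. move=> Hz. have [h1 h2] := troot_spec z Hz. have Hz' : CNle z zc eta by apply: CNle_mon rr_le_eta Hz.
have he := eta_pos. have hA := Ac_pos.
have := root_lip z zc rr (troot z) tc Hz' (CNle_refl zc eta ltac:(lra)) Hz h1 ltac:(rewrite (_ : (tc - tc)%C = RtoC 0); [rewrite Cmod_0; lra | ring]) h2 H0.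
move=> h. apply: Rle_trans h _. have := rr_M0. move=> h'.
apply (Rmult_le_reg_r (Cmod Ac)) => //. field_simplify; lra. Qed.

Lemma troot_uniq z u : CNle z zc rr -> Cmod (u - tc)%C <= eta -> Hf s z u = RtoC 0 -> u = troot z.
Proof. move=> Hz Hu Eu. have [h1 h2] := troot_spec z Hz. have Hz' : CNle z zc eta by apply: CNle_mon rr_le_eta Hz.
have := root_lip z z 0 u (troot z) Hz' Hz' (CNle_refl z 0 ltac:(lra)) Hu h1 Eu h2.
have -> : 2 * 0 * M0 / Cmod Ac = 0 by field; have := Ac_pos; lra.
move=> h. have : (u - troot z)%C = RtoC 0 by apply Cmod_eq_0; have := Cmod_ge_0 (u - troot z)%C; lra.
move=> E. have -> : u = ((u - troot z) + troot z)%C by ring. rewrite E. ring. Qed.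

Lemma troot_lip z w d : CNle z zc rr -> CNle w zc rr -> CNle z w d ->
  Cmod (troot z - troot w)%C <= 2 * d * M0 / Cmod Ac.
Proof. move=> Hz Hw Hd. have [h1 h2] := troot_spec z Hz. have [h3 h4] := troot_spec w Hw.
apply: root_lip => //; by apply: CNle_mon rr_le_eta _. Qed.


Definition Oset (z : CN N) : Prop := CN_ball zc rr z.

Lemma O_CNle z : Oset z -> CNle z zc rr.
Proof. move=> H j. apply Rlt_le. apply H. Qed.

Lemma CNle_shift (z : CN N) i b h : CNle (shift z i b h) z (Rabs h).
Proof. move=> j. rewrite /shift. case: (j == i).
- have -> : (z j + RtoC h * (if b then Ci else RtoC 1) - z j)%C = (RtoC h * dirv b)%C by rewrite /dirv; ring.
  rewrite Cmod_mult Cmod_dirv Cmod_R. lra.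
- have -> : (z j - z j)%C = RtoC 0 by ring. rewrite Cmod_0. apply Rabs_pos. Qed.

Lemma shift0 (z : CN N) i b : shift z i b 0 = z.
Proof. apply functional_extensionality => j. rewrite /shift. case: (j == i) => //. ring. Qed.

Lemma shift_O z i b : Oset z -> exists d, 0 < d /\ forall h, Rabs h < d -> Oset (shift z i b h).
Proof. move=> Hz. exists (rr - Cmod (z i - zc i)%C). split. have := Hz i. lra.
move=> h Hh j. rewrite /shift. case E: (j == i).
- move/eqP: E => ->. apply: Rle_lt_trans (Cmod_sub_tri _ (z i) _) _.
  have -> : (z i + RtoC h * (if b then Ci else RtoC 1) - z i)%C = (RtoC h * dirv b)%C by rewrite /dirv; ring.
  rewrite Cmod_mult Cmod_dirv Cmod_R. lra.
- apply Hz. Qed.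

Lemma Fh_O z i b : Oset z -> Fh (fun h => Oset (shift z i b h)).
Proof. move=> Hz. have [d [hd H]] := shift_O z i b Hz. exists d. split => // h [_ Hh]. by apply H. Qed.

Lemma Clim_eqv {T} (F : (T -> Prop) -> Prop) f (l l' : C) : l = l' -> Clim F f l -> Clim F f l'.
Proof. by move=> ->. Qed.

Lemma Clim_h : Clim Fh (fun h => RtoC h) (RtoC 0).
Proof. move=> e he. exists e. split => // h [_ Hh]. have -> : (RtoC h - RtoC 0)%C = RtoC h by ring. by rewrite Cmod_R. Qed.

Lemma troot_in z : Oset z -> Cmod (troot z - tc)%C <= eta /\ Cmod (troot z) <= Bc.
Proof. move=> Hz. have [h1 _] := troot_spec z (O_CNle z Hz). split => //. apply in_Bc. have := eta_le1. lra. Qed.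

Lemma troot_root z : Oset z -> Hf s z (troot z) = RtoC 0.
Proof. move=> Hz. by have [_ h] := troot_spec z (O_CNle z Hz). Qed.

Lemma troot_shift_lim z i b : Oset z -> Clim Fh (fun h => troot (shift z i b h)) (troot z).
Proof. move=> Hz. apply: (Clim_le _ Fh_filter (fun h => RtoC h) _ (RtoC 0) _ (2 * M0 / Cmod Ac)) _ _ Clim_h.
- have := M0_ge0. have := Ac_pos. move=> h1 h2. apply Rmult_le_pos; [lra | apply Rlt_le, Rinv_0_lt_compat; lra].
- apply: (@filter_imp _ _ Fh_filter) (Fh_O z i b Hz). move=> h Hh.
  have := troot_lip (shift z i b h) z (Rabs h) (O_CNle _ Hh) (O_CNle _ Hz) (CNle_shift z i b h).
  have -> : (RtoC h - RtoC 0)%C = RtoC h by ring. rewrite Cmod_R. move=> H. apply: Rle_trans H _. right. field. have := Ac_pos. lra. Qed.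

Lemma Cpow_lim {T} (F : (T -> Prop) -> Prop) (HF : Filter F) (f : T -> C) (l : C) n :
  F (fun x => Cmod (f x) <= Bc) -> Cmod l <= Bc -> Clim F f l -> Clim F (fun x => Cpow (f x) n) (Cpow l n).
Proof. move=> Hb Hl Hf. apply: (Clim_le _ HF f _ l _ (INR n * Bc ^ n)) _ _ Hf.
- apply Rmult_le_pos; [apply pos_INR | apply pow_le; have := Bc_ge1; lra].
- apply: filter_imp Hb. move=> x Hx. apply Cpow_lip => //. apply Bc_ge1. Qed.

Lemma DD_shift_lim a n z i b : Oset z ->
  Clim Fh (fun h => DD a n z (troot (shift z i b h)) (troot z)) (DD a n z (troot z) (troot z)).
Proof. move=> Hz. apply: (Clim_le _ Fh_filter (fun h => troot (shift z i b h)) _ (troot z) _ (KD a n z Bc)) _ _ (troot_shift_lim z i b Hz).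
- apply KD_ge0. have := Bc_ge1. lra.
- apply: (@filter_imp _ _ Fh_filter) (Fh_O z i b Hz). move=> h Hh.
  have [_ h1] := troot_in _ Hh. have [_ h2] := troot_in _ Hz.
  rewrite Rmult_comm. apply DD_cont => //. apply Bc_ge1. apply CNle_refl. apply Cmod_ge_0.
  right. reflexivity. have -> : (troot z - troot z)%C = RtoC 0 by ring. rewrite Cmod_0. apply Cmod_ge_0. Qed.

Lemma Fh_shift_in z i b : Oset z -> Fh (fun h => Cmod (troot (shift z i b h)) <= Bc).
Proof. move=> Hz. apply: (@filter_imp _ _ Fh_filter) (Fh_O z i b Hz). move=> h Hh. by have [_ ?] := troot_in _ Hh. Qed.

Definition tdot z i b : C :=
  (- (dirv b * (aH s i * Cpow (troot z) (s i))) / DD (aH s) s z (troot z) (troot z))%C.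

Lemma DD_O_ne0 z t1 t2 : Oset z -> Cmod (t1 - tc)%C <= eta -> Cmod (t2 - tc)%C <= eta -> DD (aH s) s z t1 t2 <> RtoC 0.
Proof. move=> Hz H1 H2 E. have := DD_near_lb z t1 t2 (CNle_mon _ _ _ _ rr_le_eta (O_CNle z Hz)) H1 H2.
rewrite E Cmod_0. have := Ac_pos. lra. Qed.

Lemma Fh_O' z i b (P : R -> Prop) : Oset z -> (forall h, h <> 0 -> Oset (shift z i b h) -> P h) -> Fh P.
Proof. move=> Hz HQ. have [d [hd H]] := shift_O z i b Hz. exists d. split => // h [h1 h2].
apply HQ. move=> E; rewrite E Rabs_R0 in h1; lra. by apply H. Qed.

Lemma RtoC_ne0 (h : R) : h <> 0 -> RtoC h <> RtoC 0.
Proof. move=> Hh E. apply Hh. by case: E. Qed.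

Lemma shift_eq z i b h : Oset z -> Oset (shift z i b h) ->
  ((troot (shift z i b h) - troot z) * DD (aH s) s z (troot (shift z i b h)) (troot z) =
   - (RtoC h * (dirv b * (aH s i * Cpow (troot (shift z i b h)) (s i)))))%C.
Proof. move=> Hz Hh. rewrite -Pz_diff.
have E1 := troot_root _ Hh. have E2 := troot_root _ Hz. rewrite /Hf Pz_shift in E1. rewrite /Hf in E2.
have -> : Pz (aH s) s z (troot z) = RtoC 1.
{ have -> : Pz (aH s) s z (troot z) = ((Pz (aH s) s z (troot z) - 1) + 1)%C by ring. rewrite E2. ring. }
have -> : Pz (aH s) s z (troot (shift z i b h)) =
  ((Pz (aH s) s z (troot (shift z i b h)) + RtoC h * dirv b * (aH s i * Cpow (troot (shift z i b h)) (s i)) - 1) + 1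
   - RtoC h * dirv b * (aH s i * Cpow (troot (shift z i b h)) (s i)))%C by ring.
rewrite E1. ring. Qed.

Lemma troot_quot z i b : Oset z ->
  Clim Fh (fun h => ((troot (shift z i b h) - troot z) / RtoC h)%C) (tdot z i b).
Proof. move=> Hz. have [hz1 hz2] := troot_in z Hz.
apply: (Clim_ext _ Fh_filter (fun h => (- (dirv b * (aH s i * Cpow (troot (shift z i b h)) (s i))) * / DD (aH s) s z (troot (shift z i b h)) (troot z))%C)).
- apply: (Fh_O' z i b) => // h Hh0 Hh. have [h1 h2] := troot_in _ Hh.
  have HD := DD_O_ne0 z _ _ Hz h1 hz1. have Hh0' := RtoC_ne0 h Hh0.
  have E := shift_eq z i b h Hz Hh.
  have E' : (troot (shift z i b h) - troot z = (- (RtoC h * (dirv b * (aH s i * Cpow (troot (shift z i b h)) (s i))))) / DD (aH s) s z (troot (shift z i b h)) (troot z))%C.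
  { rewrite -E. field. exact HD. }
  rewrite E'. field. split => //.
- rewrite /tdot. apply: Clim_mult. apply Fh_filter.
  + apply: Clim_opp. apply Fh_filter. apply: Clim_mult. apply Fh_filter. apply Clim_const. apply Fh_filter.
    apply: Clim_mult. apply Fh_filter. apply Clim_const. apply Fh_filter.
    apply: Cpow_lim. apply Fh_filter. by apply Fh_shift_in. done. by apply troot_shift_lim.
  + apply: Clim_inv. apply Fh_filter. by apply: DD_O_ne0. by apply DD_shift_lim. Qed.

Definition dP a n z i b : C :=
  (dirv b * (a i * Cpow (troot z) (n i)) + tdot z i b * DD a n z (troot z) (troot z))%C.

Lemma P_quot a n z i b : Oset z ->
  Clim Fh (fun h => ((Pz a n (shift z i b h) (troot (shift z i b h)) - Pz a n z (troot z)) / RtoC h)%C) (dP a n z i b).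
Proof. move=> Hz. have [hz1 hz2] := troot_in z Hz.
apply: (Clim_ext _ Fh_filter (fun h => (dirv b * (a i * Cpow (troot (shift z i b h)) (n i)) + ((troot (shift z i b h) - troot z) / RtoC h) * DD a n z (troot (shift z i b h)) (troot z))%C)).
- apply: (Fh_O' z i b) => // h Hh0 Hh. have Hh0' := RtoC_ne0 h Hh0.
  rewrite Pz_shift.
  have -> : (Pz a n z (troot (shift z i b h)) = (Pz a n z (troot (shift z i b h)) - Pz a n z (troot z)) + Pz a n z (troot z))%C by ring.
  rewrite Pz_diff. field. done.
- rewrite /dP. apply: Clim_plus. apply Fh_filter.
  + apply: Clim_mult. apply Fh_filter. apply Clim_const. apply Fh_filter.
    apply: Clim_mult. apply Fh_filter. apply Clim_const. apply Fh_filter.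
    apply: Cpow_lim. apply Fh_filter. by apply Fh_shift_in. done. by apply troot_shift_lim.
  + apply: Clim_mult. apply Fh_filter. by apply troot_quot. by apply DD_shift_lim. Qed.

Lemma P_lim a n z i b : Oset z ->
  Clim Fh (fun h => Pz a n (shift z i b h) (troot (shift z i b h))) (Pz a n z (troot z)).
Proof. move=> Hz.
apply: (Clim_ext _ Fh_filter (fun h => (Pz a n z (troot z) + RtoC h * ((Pz a n (shift z i b h) (troot (shift z i b h)) - Pz a n z (troot z)) / RtoC h))%C)).
- apply: (Fh_O' z i b) => // h Hh0 Hh. have Hh0' := RtoC_ne0 h Hh0. field. done.
- apply: Clim_eqv; last first. apply: Clim_plus. apply Fh_filter. apply Clim_const. apply Fh_filter.
  apply: Clim_mult. apply Fh_filter. apply Clim_h. by apply P_quot. ring. Qed.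

Definition xs (z : CN N) : C := (/ P1 s z (troot z))%C.
Definition lam (z : CN N) : C := (1 + gP s z (troot z))%C.

Lemma P1_O_ne0 z : Oset z -> P1 s z (troot z) <> RtoC 0.
Proof. move=> Hz. have [h1 _] := troot_in z Hz. apply: P1_near_ne0 => //. apply: CNle_mon rr_le_eta (O_CNle z Hz). Qed.

Definition Dxs z i b : C := (- dP (a1 s) (n1 s) z i b * / P1 s z (troot z) * / P1 s z (troot z))%C.
Definition Dlam z i b : C := dP ag s z i b.

Lemma xs_quot z i b : Oset z -> Clim Fh (fun h => ((xs (shift z i b h) - xs z) / RtoC h)%C) (Dxs z i b).
Proof. move=> Hz. have H0z := P1_O_ne0 z Hz.
apply: (Clim_ext _ Fh_filter (fun h => (- ((P1 s (shift z i b h) (troot (shift z i b h)) - P1 s z (troot z)) / RtoC h) * / P1 s (shift z i b h) (troot (shift z i b h)) * / P1 s z (troot z))%C)).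
- apply: (Fh_O' z i b) => // h Hh0 Hh. have Hh0' := RtoC_ne0 h Hh0. have Hh1 := P1_O_ne0 _ Hh.
  rewrite /xs. field. repeat split; assumption.
- rewrite /Dxs. apply: Clim_mult. apply Fh_filter. apply: Clim_mult. apply Fh_filter.
  apply: Clim_opp. apply Fh_filter. exact: (P_quot (a1 s) (n1 s)).
  apply: Clim_inv. apply Fh_filter. done. exact: (P_lim (a1 s) (n1 s)). apply Clim_const. apply Fh_filter. Qed.

Lemma lam_quot z i b : Oset z -> Clim Fh (fun h => ((lam (shift z i b h) - lam z) / RtoC h)%C) (Dlam z i b).
Proof. move=> Hz.
apply: (Clim_ext _ Fh_filter (fun h => ((gP s (shift z i b h) (troot (shift z i b h)) - gP s z (troot z)) / RtoC h)%C)).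
- apply: (@filter_imp _ _ Fh_filter) (@filter_true _ _ Fh_filter). move=> h _. rewrite /lam. have -> : (1 + gP s (shift z i b h) (troot (shift z i b h)) - (1 + gP s z (troot z)) = gP s (shift z i b h) (troot (shift z i b h)) - gP s z (troot z))%C by ring. done.
- exact: (P_quot ag s). Qed.

Lemma ball_CNle (z0 w : CN N) d : CN_ball z0 d w -> CNle w z0 d.
Proof. move=> H j. apply Rlt_le. apply H. Qed.

Lemma troot_zlim z0 : Oset z0 -> Clim (Fz Oset z0) troot (troot z0).
Proof. move=> Hz0 e he. have hA := Ac_pos. have hM := M0_ge0.
exists (e * Cmod Ac / (2 * (M0 + 1))). split. apply Rdiv_lt_0_compat; [nra | lra].
move=> w Ow Bw. apply: Rle_lt_trans (troot_lip w z0 _ (O_CNle _ Ow) (O_CNle _ Hz0) (ball_CNle _ _ _ Bw)) _.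
apply (Rmult_lt_reg_r (Cmod Ac)) => //. field_simplify; try lra.
apply (Rmult_lt_reg_r (M0 + 1)); first lra. field_simplify; try lra. nra. Qed.

Lemma Fz_in z0 : Fz Oset z0 (fun w => Oset w /\ Cmod (troot w) <= Bc).
Proof. exists 1. split; first lra. move=> w Ow _. split => //. by have [_ ?] := troot_in w Ow. Qed.

Lemma DD_zlim a n z0 : Oset z0 ->
  Clim (Fz Oset z0) (fun w => DD a n w (troot w) (troot w)) (DD a n z0 (troot z0) (troot z0)).
Proof. move=> Hz0 e he. have hK := KD_ge0 a n z0 Bc ltac:(have := Bc_ge1; lra).
set e' := e / (KD a n z0 Bc + 1).
have he' : 0 < e' by apply Rdiv_lt_0_compat; lra.
have [d1 [hd1 H1]] := troot_zlim z0 Hz0 e' he'.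
exists (Rmin d1 e'). split; first by apply Rmin_pos.
move=> w Ow Bw. have [_ hw] := troot_in w Ow. have [_ h0] := troot_in z0 Hz0.
have Bw1 : CN_ball z0 d1 w by move=> j; apply: Rlt_le_trans (Bw j) (Rmin_l _ _).
have Bw2 : CNle w z0 e' by move=> j; apply Rlt_le; apply: Rlt_le_trans (Bw j) (Rmin_r _ _).
have Ht := H1 w Ow Bw1.
apply: Rle_lt_trans (DD_cont a n w z0 _ _ _ Bc e' Bc_ge1 hw hw h0 Bw2 _ _) _; try lra.
apply (Rmult_lt_reg_r (KD a n z0 Bc + 1)); first lra. rewrite /e'. field_simplify; lra. Qed.

Lemma Pz_zlim a n z0 : Oset z0 ->
  Clim (Fz Oset z0) (fun w => Pz a n w (troot w)) (Pz a n z0 (troot z0)).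
Proof. move=> Hz0 e he. have hK := KP_ge0 a n z0 Bc ltac:(have := Bc_ge1; lra).
set e' := e / (KP a n z0 Bc + 1).
have he' : 0 < e' by apply Rdiv_lt_0_compat; lra.
have [d1 [hd1 H1]] := troot_zlim z0 Hz0 e' he'.
exists (Rmin d1 e'). split; first by apply Rmin_pos.
move=> w Ow Bw. have [_ hw] := troot_in w Ow. have [_ h0] := troot_in z0 Hz0.
have Bw1 : CN_ball z0 d1 w by move=> j; apply: Rlt_le_trans (Bw j) (Rmin_l _ _).
have Bw2 : CNle w z0 e' by move=> j; apply Rlt_le; apply: Rlt_le_trans (Bw j) (Rmin_r _ _).
have Ht := H1 w Ow Bw1.
apply: Rle_lt_trans (Pz_cont a n w z0 _ _ Bc e' Bc_ge1 hw h0 Bw2 _) _; try lra.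
apply (Rmult_lt_reg_r (KP a n z0 Bc + 1)); first lra. rewrite /e'. field_simplify; lra. Qed.

Lemma pow_zlim z0 n : Oset z0 -> Clim (Fz Oset z0) (fun w => Cpow (troot w) n) (Cpow (troot z0) n).
Proof. move=> Hz0. apply: Cpow_lim. apply Fz_filter.
apply: (@filter_imp _ _ (Fz_filter Oset z0)) (Fz_in z0). by move=> w [].
by have [_ ?] := troot_in z0 Hz0. by apply troot_zlim. Qed.

Lemma tdot_zlim z0 i b : Oset z0 -> Clim (Fz Oset z0) (fun w => tdot w i b) (tdot z0 i b).
Proof. move=> Hz0. have HF := Fz_filter Oset z0. rewrite /tdot.
apply: Clim_mult => //. apply: Clim_opp => //. apply: Clim_mult => //. apply Clim_const => //.
apply: Clim_mult => //. apply Clim_const => //. by apply pow_zlim.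
apply: Clim_inv => //. have [h1 _] := troot_in z0 Hz0. by apply: DD_O_ne0.
by apply DD_zlim. Qed.

Lemma dP_zlim a n z0 i b : Oset z0 -> Clim (Fz Oset z0) (fun w => dP a n w i b) (dP a n z0 i b).
Proof. move=> Hz0. have HF := Fz_filter Oset z0. rewrite /dP.
apply: Clim_plus => //. apply: Clim_mult => //. apply Clim_const => //.
apply: Clim_mult => //. apply Clim_const => //. by apply pow_zlim.
apply: Clim_mult => //. by apply tdot_zlim. by apply DD_zlim. Qed.

Lemma Dxs_zlim z0 i b : Oset z0 -> Clim (Fz Oset z0) (fun w => Dxs w i b) (Dxs z0 i b).
Proof. move=> Hz0. have HF := Fz_filter Oset z0. rewrite /Dxs.
have HP1 := P1_O_ne0 z0 Hz0.
apply: Clim_mult => //. apply: Clim_mult => //. apply: Clim_opp => //. by apply dP_zlim.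
apply: Clim_inv => //. exact: (Pz_zlim (a1 s) (n1 s)).
apply: Clim_inv => //. exact: (Pz_zlim (a1 s) (n1 s)). Qed.

Lemma Dlam_zlim z0 i b : Oset z0 -> Clim (Fz Oset z0) (fun w => Dlam w i b) (Dlam z0 i b).
Proof. move=> Hz0. by apply dP_zlim. Qed.

Lemma C1_of (f : CN N -> C) (D : CN N -> 'I_N -> bool -> C) :
  (forall z i b, Oset z -> Clim Fh (fun h => ((f (shift z i b h) - f z) / RtoC h)%C) (D z i b)) ->
  (forall z i b, Oset z -> Clim (Fz Oset z) (fun w => D w i b) (D z i b)) ->
  @C1_on N C_R_NormedModule f Oset.
Proof. move=> Hd Hc. exists (fun i b z => D z i b). split.
- move=> z i b Hz. apply Clim_is_derive. rewrite shift0. by apply Hd.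
- move=> i b z Hz eps He. have [d [hd H]] := Hc z i b Hz eps He. exists d. split => // w Ow Bw.
  rewrite normC. exact (H w Ow Bw). Qed.

Lemma C1_xs : @C1_on N C_R_NormedModule xs Oset.
Proof. apply: (C1_of xs Dxs). apply xs_quot. apply Dxs_zlim. Qed.

Lemma C1_lam : @C1_on N C_R_NormedModule lam Oset.
Proof. apply: (C1_of lam Dlam). apply lam_quot. apply Dlam_zlim. Qed.

Lemma leg_real (f : R -> R) lo hi : lo < hi ->
  (forall t, 0 <= t <= 1 -> continuity_pt f t) ->
  (forall t, 0 <= t <= 1 -> f t <= lo \/ hi < f t) -> f 0 <= lo -> f 1 <= lo.
Proof. move=> Hlh Hc Hb Hf0. case: (Hb 1 ltac:(lra)) => // H1. exfalso.
have [t [Ht Et]] := Ranalysis5.IVT_interv (fun t => f t - (lo + hi) / 2) 0 1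
  (fun a Ha => continuity_pt_minus _ _ _ (Hc a Ha) (continuity_pt_const (fun _ => (lo + hi) / 2) a (fun _ _ => erefl))) ltac:(lra) ltac:(simpl; lra) ltac:(simpl; lra).
simpl in Et. case: (Hb t Ht); lra. Qed.

Lemma cont_pt_of (f : R -> R) t0 :
  (forall e, 0 < e -> exists d, 0 < d /\ forall t, Rabs (t - t0) < d -> Rabs (f t - f t0) < e) -> continuity_pt f t0.
Proof. move=> H e he. have [d [hd Hd]] := H e he. exists d. split => // x [_ Hx]. by apply Hd. Qed.

Lemma derive_cont_eps (f : R -> C) l : @is_derive R_AbsRing C_R_NormedModule f 0 l ->
  forall e, 0 < e -> exists d, 0 < d /\ forall t, Rabs t < d -> Cmod (f t - f 0)%C < e.
Proof. move=> Hd e he.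
have Hc := @ex_derive_continuous R_AbsRing C_R_NormedModule f 0 (ex_intro _ l Hd).
have he2 : 0 < e / 2 by lra.
have [[d hd] Hdd] := Hc _ (locally_ball (f 0) (mkposreal _ he2)).
exists d. split => // t Ht.
have Hb : ball 0 d t. { rewrite /ball /= /AbsRing_ball /abs /= /minus /plus /opp /=. by rewrite Ropp_0 Rplus_0_r. }
have := Hdd t Hb. rewrite /ball /= /prod_ball /= /ball /= /AbsRing_ball /abs /= /minus /plus /opp /=. move=> [h1 h2].
apply: Rle_lt_trans (Cmod_le_sum _) _. simpl. lra. Qed.

Definition Ft (t0 : R) : (R -> Prop) -> Prop := fun P => exists d, 0 < d /\ forall t, Rabs (t - t0) < d -> P t.

Lemma Ft_filter t0 : Filter (Ft t0).
Proof. split.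
- exists 1. split; [lra|done].
- move=> P Q [d1 [h1 H1]] [d2 [h2 H2]]. exists (Rmin d1 d2). split; first by apply Rmin_pos.
  move=> t Ht. split; [apply H1 | apply H2]; apply: Rlt_le_trans Ht _; [apply Rmin_l | apply Rmin_r].
- move=> P Q HPQ [d [hd H]]. exists d. split => // t Ht. by apply HPQ, H. Qed.

Lemma shift_shift (w : CN N) i b a c : shift (shift w i b a) i b c = shift w i b (a + c).
Proof. apply functional_extensionality => j. rewrite /shift. case: (j == i) => //. rewrite RtoC_plus. ring. Qed.

Lemma C1_shift_cont (f : CN N -> C) : @C1_on N C_R_NormedModule f Oset ->
  forall z i b, Oset z -> forall e, 0 < e -> exists d, 0 < d /\ forall t, Rabs t < d -> Cmod (f (shift z i b t) - f z)%C < e.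
Proof. move=> [D [HD _]] z i b Hz e he. have := derive_cont_eps _ _ (HD z i b Hz) e he. by rewrite shift0. Qed.

Lemma leg_Clim (f : CN N -> C) w i b (L t0 : R) : @C1_on N C_R_NormedModule f Oset ->
  Oset (shift w i b (t0 * L)) -> Clim (Ft t0) (fun t => f (shift w i b (t * L))) (f (shift w i b (t0 * L))).
Proof. move=> Hf Hp e he. have [d [hd Hd]] := C1_shift_cont f Hf _ i b Hp e he.
exists (d / (Rabs L + 1)). split. apply Rdiv_lt_0_compat => //. have := Rabs_pos L; lra.
move=> t Ht. have -> : shift w i b (t * L) = shift (shift w i b (t0 * L)) i b ((t - t0) * L).
{ rewrite shift_shift. f_equal. ring. }
apply Hd. rewrite Rabs_mult. have := Rabs_pos L. have := Rabs_pos (t - t0). move=> h1 h2.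
apply (Rmult_lt_compat_r (Rabs L + 1)) in Ht; last lra.
have : d / (Rabs L + 1) * (Rabs L + 1) = d by field; lra.
nra. Qed.

Lemma root_dichot z u : Oset z -> Hf s z u = RtoC 0 -> Cmod (u - tc)%C <= eta / 4 \/ eta < Cmod (u - tc)%C.
Proof. move=> Hz Hu. case: (Rle_lt_dec (Cmod (u - tc)%C) eta) => H; last by right.
left. rewrite (troot_uniq z u (O_CNle z Hz) H Hu). by apply troot_close, O_CNle. Qed.

Section Uniq.
Context (xs' lam' : CN N -> C)
  (Hc1 : @C1_on N C_R_NormedModule xs' Oset) (Hc2 : @C1_on N C_R_NormedModule lam' Oset)
  (Heq : forall z, Oset z -> F s z (lam' z) (xs' z) = RtoC 0 /\ dyF s z (lam' z) (xs' z) = RtoC 0)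
  (Hs1 : forall i, (1 <= s i)%coq_nat).

Definition tp z := (xs' z * lam' z)%C.

Lemma tp_root z : Oset z ->
  Hf s z (tp z) = RtoC 0 /\ (xs' z * P1 s z (tp z))%C = RtoC 1 /\ lam' z = (1 + gP s z (tp z))%C.
Proof. move=> Hz. have [E1 E2] := Heq z Hz. rewrite F_eq in E1. rewrite dyF_eq2 // in E2.
rewrite /tp. move: E1 E2. generalize (xs' z) (lam' z) => x y E1 E2.
have Ex : (x * P1 s z (x * y))%C = RtoC 1.
{ have -> : (x * P1 s z (x * y))%C = (1 - (1 - x * P1 s z (x * y)))%C by ring. rewrite E2. ring. }
have Ey : y = (1 + gP s z (x * y))%C.
{ transitivity ((y - 1 - gP s z (x * y)) + 1 + gP s z (x * y))%C; first ring. rewrite E1. ring. }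
split; last by split.
rewrite /Hf H_eq //.
have -> : (x * y * P1 s z (x * y) - gP s z (x * y) - 1)%C = (y * (x * P1 s z (x * y)) - (1 + gP s z (x * y)))%C by ring.
rewrite Ex -Ey. ring. Qed.

Lemma tp_leg w i b L : (forall t, 0 <= t <= 1 -> Oset (shift w i b (t * L))) ->
  Cmod (tp w - tc)%C <= eta / 4 -> Cmod (tp (shift w i b L) - tc)%C <= eta / 4.
Proof. move=> Hin Hw.
have := leg_real (fun t => Cmod (tp (shift w i b (t * L)) - tc)%C) (eta / 4) eta ltac:(have := eta_pos; lra).
rewrite Rmult_0_l Rmult_1_l shift0. apply => //.
- move=> t0 Ht0. apply cont_pt_of => e he.
  have Hm := Clim_mult _ (Ft_filter t0) _ _ _ _ (leg_Clim xs' w i b L t0 Hc1 (Hin t0 Ht0)) (leg_Clim lam' w i b L t0 Hc2 (Hin t0 Ht0)).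
  have [d [hd Hd]] := Hm e he. exists d. split => // t Ht.
  apply: Rle_lt_trans (Cmod_rev_abs _ _) _.
  have -> : (tp (shift w i b (t * L)) - tc - (tp (shift w i b (t0 * L)) - tc))%C = (tp (shift w i b (t * L)) - tp (shift w i b (t0 * L)))%C by ring.
  exact: Hd t Ht.
- move=> t Ht. have Ho := Hin t Ht. have [Hr _] := tp_root _ Ho. by apply: root_dichot. Qed.

Definition wk (z : CN N) (k : nat) : CN N := fun j => if leq (S (nat_of_ord j)) k then z j else zc j.

Lemma wk_O z k : Oset z -> Oset (wk z k).
Proof. move=> Hz j. rewrite /wk. case: (leq (S (nat_of_ord j)) k). apply Hz.
have -> : (zc j - zc j)%C = RtoC 0 by ring. rewrite Cmod_0. apply rr_pos. Qed.

Lemma wk0 z : wk z 0 = zc.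
Proof. by apply functional_extensionality => j. Qed.

Lemma wkN z : wk z N = z.
Proof. apply functional_extensionality => j. by rewrite /wk ltn_ord. Qed.

Lemma Cmod_pair_le (a b t : R) : 0 <= t <= 1 -> Cmod (a, t * b) <= Cmod (a, b).
Proof. move=> Ht. rewrite /Cmod /=. apply sqrt_le_1_alt. have : (t * b)^2 <= b^2.
{ rewrite Rpow_mult_distr. have : t ^ 2 <= 1 by nra. have := pow2_ge_0 b. nra. }
lra. Qed.

Lemma wk_step z k (Hk : (k < N)%coq_nat) : Oset z ->
  Cmod (tp (wk z k) - tc)%C <= eta / 4 -> Cmod (tp (wk z k.+1) - tc)%C <= eta / 4.
Proof. move=> Hz Hw.
set i : 'I_N := Ordinal (introT ltP Hk).
set d := (z i - zc i)%C.
have Hd : Cmod d < rr by apply Hz.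
have Hwi : wk z k i = zc i by rewrite /wk /= ltnn.
set v := shift (wk z k) i false (fst d).
have E : wk z k.+1 = shift v i true (1 * snd d).
{ apply functional_extensionality => j. rewrite /v /shift /wk. case E: (j == i).
  - move/eqP: E => ->. rewrite /= ltnSn /= ltnn. rewrite /d. apply injective_projections; simpl; ring.
  - have Hj : leq (S (nat_of_ord j)) k.+1 = leq (S (nat_of_ord j)) k.
    { rewrite ltnS leq_eqVlt. have : (nat_of_ord j == k) = false. { apply/negP => /eqP Ej. move/negP: E; apply. apply/eqP. by apply val_inj. }
      by move=> ->. }
    by rewrite Hj. }
rewrite E. apply tp_leg.
- move=> t Ht j. rewrite /shift /v /shift. case Ej: (j == i).
  + move/eqP: Ej => ->. rewrite Hwi.
    have -> : (zc i + RtoC (fst d) * RtoC 1 + RtoC (t * (1 * snd d)) * Ci - zc i)%C = (fst d, t * snd d) by apply injective_projections; simpl; ring.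
    apply: Rle_lt_trans (Cmod_pair_le _ _ _ Ht) _. by rewrite -surjective_pairing.
  + by apply (wk_O z k Hz).
- have -> : v = shift (wk z k) i false (1 * fst d) by rewrite Rmult_1_l.
  apply tp_leg => //.
  move=> t Ht j. rewrite /shift. case Ej: (j == i).
  + move/eqP: Ej => ->. rewrite Hwi.
    have -> : (zc i + RtoC (t * (1 * fst d)) * RtoC 1 - zc i)%C = (t * fst d, t * 0) by apply injective_projections; simpl; ring.
    apply: Rle_lt_trans (Cmod_pair_le _ _ _ Ht) _.
    apply: Rle_lt_trans _ Hd. rewrite /Cmod. apply sqrt_le_1_alt.
    case: Ht => Ht1 Ht2. simpl. set a := (_ + - _). set bb := ((z i).2 + _).
    have h1 : t * t <= 1 by nra. have h2 : 0 <= a * a by nra. have h3 : 0 <= bb * bb by nra.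
    have : t * t * (a * a) <= 1 * (a * a) by apply Rmult_le_compat_r. nra.
  + by apply (wk_O z k Hz). Qed.

Lemma tp_close z (Hz : Oset z) (H0' : tp zc = tc) : Cmod (tp z - tc)%C <= eta / 4.
Proof. rewrite -(wkN z).
have : forall k, (k <= N)%coq_nat -> Cmod (tp (wk z k) - tc)%C <= eta / 4.
{ elim=> [|k IH] Hk.
  - rewrite wk0 H0'. have -> : (tc - tc)%C = RtoC 0 by ring. rewrite Cmod_0. have := eta_pos. lra.
  - apply: (wk_step z k ltac:(lia) Hz). apply IH. lia. }
apply. lia. Qed.

Lemma uniq_main z (Hz : Oset z) (H0' : tp zc = tc) : xs' z = xs z /\ lam' z = lam z.
Proof. have Hc := tp_close z Hz H0'. have [Hr [Hx Hl]] := tp_root z Hz.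
have Et : tp z = troot z. { apply troot_uniq => //. by apply O_CNle. have := eta_pos. lra. }
rewrite Et in Hx Hl. split => //.
rewrite /xs. have HP1 := P1_O_ne0 z Hz.
have -> : xs' z = ((xs' z * P1 s z (troot z)) * / P1 s z (troot z))%C by field.
rewrite Hx. ring. Qed.

End Uniq.

Lemma xs_lam_t z : Oset z -> (forall i, (1 <= s i)%coq_nat) -> (xs z * lam z)%C = troot z.
Proof. move=> Hz Hs1. have Hr := troot_root z Hz. have HP1 := P1_O_ne0 z Hz.
rewrite /Hf H_eq // in Hr. rewrite /xs /lam.
have -> : (1 + gP s z (troot z))%C = (troot z * P1 s z (troot z))%C.
{ transitivity ((troot z * P1 s z (troot z) - gP s z (troot z) - 1) + 1 + gP s z (troot z) - (0 - troot z * P1 s z (troot z) + troot z * P1 s z (troot z)))%C.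
  rewrite Hr. ring. ring. }
field. exact HP1. Qed.

Lemma xs_lam_eqs z : Oset z -> (forall i, (1 <= s i)%coq_nat) ->
  F s z (lam z) (xs z) = RtoC 0 /\ dyF s z (lam z) (xs z) = RtoC 0.
Proof. move=> Hz Hs1. have E := xs_lam_t z Hz Hs1. have HP1 := P1_O_ne0 z Hz.
rewrite F_eq dyF_eq2 // E. split.
- rewrite /lam. ring.
- rewrite /xs. field. exact HP1. Qed.

Lemma xs_ne0 z : Oset z -> xs z <> RtoC 0.
Proof. move=> Hz E. have HP1 := P1_O_ne0 z Hz. have := Cmod_inv _ HP1. rewrite -/(xs z) E Cmod_0.
have := proj1 (Cmod_gt_0 _) HP1. move=> h1 h2. have := Rinv_0_lt_compat _ h1. lra. Qed.

Lemma fst_divR (u : C) (h : R) : h <> 0 -> fst (u / RtoC h)%C = fst u / h.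
Proof. move=> Hh. rewrite /Cdiv /Cinv /=. field. exact Hh. Qed.
Lemma snd_divR (u : C) (h : R) : h <> 0 -> snd (u / RtoC h)%C = snd u / h.
Proof. move=> Hh. rewrite /Cdiv /Cinv /=. field. exact Hh. Qed.

Lemma Clim_fst_derive (phi : R -> C) l : Clim Fh (fun h => ((phi h - phi 0) / RtoC h)%C) l ->
  is_derive (fun h => fst (phi h)) 0 (fst l) /\ is_derive (fun h => snd (phi h)) 0 (snd l).
Proof. move=> Hc. split; apply is_derive_Reals => e he; have [d [hd Hd]] := Hc e he; exists (mkposreal d hd) => h Hh0 Hh;
have := Hd h (conj (Rabs_pos_lt h Hh0) Hh); rewrite Rplus_0_l => H; apply: Rle_lt_trans H.
- have := re_le_Cmod ((phi h - phi 0) / RtoC h - l)%C. rewrite /Re.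
  have -> : fst ((phi h - phi 0) / RtoC h - l)%C = fst ((phi h - phi 0) / RtoC h)%C - fst l by [].
  rewrite (fst_divR _ _ Hh0). have -> : fst (phi h - phi 0)%C = fst (phi h) - fst (phi 0) by simpl; ring. done.
- have := Rmax_Cmod ((phi h - phi 0) / RtoC h - l)%C. move=> H. apply: Rle_trans _ H.
  have -> : snd ((phi h - phi 0) / RtoC h - l)%C = snd ((phi h - phi 0) / RtoC h)%C - snd l by [].
  rewrite (snd_divR _ _ Hh0). have -> : snd (phi h - phi 0)%C = snd (phi h) - snd (phi 0) by simpl; ring. apply Rmax_r. Qed.

Definition mod_der (x l : C) : R := fst (Cconj x * l * / RtoC (Cmod x))%C.

Lemma Cmod_derive (phi : R -> C) l : phi 0 <> RtoC 0 ->
  Clim Fh (fun h => ((phi h - phi 0) / RtoC h)%C) l ->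
  is_derive (fun h => Cmod (phi h)) 0 (mod_der (phi 0) l).
Proof. move=> H0' Hc. have [Hp Hq] := Clim_fst_derive phi l Hc.
have Hm : 0 < Cmod (phi 0) by apply/Cmod_gt_0.
have Hpos : 0 < fst (phi 0) ^ 2 + snd (phi 0) ^ 2.
{ case: (Rle_lt_dec (fst (phi 0) ^ 2 + snd (phi 0) ^ 2) 0) => // H.
  have E : fst (phi 0) ^ 2 + snd (phi 0) ^ 2 = 0 by have := pow2_ge_0 (fst (phi 0)); have := pow2_ge_0 (snd (phi 0)); lra.
  move: Hm. rewrite /Cmod E sqrt_0. lra. }
have Hs := is_derive_plus _ _ _ _ _ (is_derive_pow _ 2 _ _ Hp) (is_derive_pow _ 2 _ _ Hq).
have Hsq := is_derive_sqrt _ _ _ Hs Hpos.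
apply: (is_derive_ext (fun h => sqrt (fst (phi h) ^ 2 + snd (phi h) ^ 2))) => //.
have -> : mod_der (phi 0) l = plus (INR 2 * fst l * fst (phi 0) ^ Nat.pred 2) (INR 2 * snd l * snd (phi 0) ^ Nat.pred 2) / (2 * sqrt (fst (phi 0) ^ 2 + snd (phi 0) ^ 2)).
{ rewrite /mod_der /plus /=. rewrite /Cmod in Hm *. set r := sqrt _ in Hm *. field. lra. }
exact Hsq. Qed.

Lemma Cconj_minus (a b : C) : Cconj (a - b)%C = (Cconj a - Cconj b)%C.
Proof. apply injective_projections; simpl; ring. Qed.

Lemma xs_zlim z0 : Oset z0 -> Clim (Fz Oset z0) xs (xs z0).
Proof. move=> Hz0. rewrite /xs. apply: Clim_inv. apply Fz_filter. by apply P1_O_ne0. exact: (Pz_zlim (a1 s) (n1 s)). Qed.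

Lemma mod_der_zlim z0 i b : Oset z0 ->
  Clim (Fz Oset z0) (fun w => (Cconj (xs w) * Dxs w i b * / RtoC (Cmod (xs w)))%C) (Cconj (xs z0) * Dxs z0 i b * / RtoC (Cmod (xs z0)))%C.
Proof. move=> Hz0. have HF := Fz_filter Oset z0. have Hx := xs_zlim z0 Hz0.
apply: Clim_mult => //. apply: Clim_mult => //.
- apply: (Clim_le _ HF xs _ (xs z0) _ 1) => //. lra. apply: (@filter_imp _ _ HF) (@filter_true _ _ HF).
  move=> w _. rewrite -Cconj_minus Cmod_conj. lra.
- by apply Dxs_zlim.
- apply: Clim_inv => //. move=> E. have : Cmod (xs z0) = 0 by case: E. move/Cmod_eq_0. by apply xs_ne0.
  apply: (Clim_le _ HF xs _ (xs z0) _ 1) => //. lra. apply: (@filter_imp _ _ HF) (@filter_true _ _ HF).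
  move=> w _. rewrite -RtoC_minus Cmod_R. have := Cmod_rev_abs (xs w) (xs z0). lra. Qed.

Lemma C1_rho : (forall z, Oset z -> dominant s z /\ singular_pt s z (xs z)) ->
  @C1_on N R_NormedModule (fun z => real (rho_star s z)) Oset.
Proof. move=> Hdom. exists (fun i b z => mod_der (xs z) (Dxs z i b)). split.
- move=> z i b Hz.
  have Hd := Cmod_derive (fun h => xs (shift z i b h)) (Dxs z i b).
  rewrite shift0 in Hd. have Hd' := Hd (xs_ne0 z Hz) (xs_quot z i b Hz).
  apply: (is_derive_ext_loc _ _ _ _ _ Hd').
  have [d [hd Hdd]] := shift_O z i b Hz. exists (mkposreal d hd) => t Ht.
  have Ht' : Rabs t < d. { move: Ht. rewrite /ball /= /AbsRing_ball /abs /= /minus /plus /opp /=. by rewrite Ropp_0 Rplus_0_r. }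
  have [_ [_ [E _]]] := Hdom _ (Hdd t Ht'). done.
- move=> i b z Hz eps He. have [d [hd H]] := mod_der_zlim z i b Hz eps He. exists d. split => // w Ow Bw.
  have := H w Ow Bw. move=> H1. apply: Rle_lt_trans H1.
  rewrite /mod_der. change (Rabs (fst (Cconj (xs w) * Dxs w i b * / RtoC (Cmod (xs w)))%C + - fst (Cconj (xs z) * Dxs z i b * / RtoC (Cmod (xs z)))%C) <= Cmod (Cconj (xs w) * Dxs w i b * / RtoC (Cmod (xs w)) - Cconj (xs z) * Dxs z i b * / RtoC (Cmod (xs z)))%C).
  exact (re_le_Cmod (Cconj (xs w) * Dxs w i b * / RtoC (Cmod (xs w)) - Cconj (xs z) * Dxs z i b * / RtoC (Cmod (xs z)))%C). Qed.

Lemma finmax (f : 'I_N -> R) (r : R) : 0 < r -> (forall j, f j < r) -> exists m, m < r /\ forall j, f j <= m.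
Proof. move=> Hr Hf.
have : forall l : list 'I_N, exists m, m < r /\ forall j, j \in l -> f j <= m.
{ elim=> [|a l [m [hm Hm]]]. exists 0. split => //.
  exists (Rmax (f a) m). split. apply Rmax_lub_lt => //. move=> j. rewrite in_cons => /orP [/eqP ->|Hj].
  apply Rmax_l. apply: Rle_trans (Hm j Hj) _. apply Rmax_r. }
move=> /(_ (index_enum 'I_N)) [m [hm Hm]]. exists m. split => // j. apply Hm. apply mem_index_enum. Qed.

Lemma Oset_open : CN_open Oset.
Proof. move=> z Hz. have [m [hm Hm]] := finmax (fun j => Cmod (z j - zc j)%C) rr rr_pos Hz.
exists (rr - m). split; first lra. move=> w Hw j. apply: Rle_lt_trans (Cmod_sub_tri _ (z j) _) _.
have := Hw j. have := Hm j. simpl. lra. Qed.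

Lemma Oset_zc : Oset zc.
Proof. move=> j. have -> : (zc j - zc j)%C = RtoC 0 by ring. rewrite Cmod_0. apply rr_pos. Qed.

Lemma assembly (xc lamc : C) (Hs1 : forall i, (1 <= s i)%coq_nat)
  (Hx : (xc * P1 s zc tc)%C = RtoC 1) (Hl : lamc = (1 + gP s zc tc)%C) (Htc : tc = (xc * lamc)%C) :
  exists O : CN N -> Prop,
    CN_open O /\ O zc /\
    exists (xs0 lam0 : CN N -> C),
      @C1_on N C_R_NormedModule xs0 O /\ @C1_on N C_R_NormedModule lam0 O /\
      xs0 zc = xc /\ lam0 zc = lamc /\
      (forall z, O z -> F s z (lam0 z) (xs0 z) = RtoC 0 /\ dyF s z (lam0 z) (xs0 z) = RtoC 0) /\
      (forall xs' lam' : CN N -> C,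
         @C1_on N C_R_NormedModule xs' O -> @C1_on N C_R_NormedModule lam' O -> xs' zc = xc -> lam' zc = lamc ->
         (forall z, O z -> F s z (lam' z) (xs' z) = RtoC 0 /\ dyF s z (lam' z) (xs' z) = RtoC 0) ->
         forall z, O z -> xs' z = xs0 z /\ lam' z = lam0 z) /\
      ((forall z, O z -> dominant s z /\ singular_pt s z (xs0 z)) ->
         (forall z, O z -> rho_star s z = Finite (Cmod (xs0 z))) /\
         @C1_on N R_NormedModule (fun z => real (rho_star s z)) O).
Proof.
have Etc : troot zc = tc.
{ symmetry. apply troot_uniq => //. apply O_CNle, Oset_zc. have -> : (tc - tc)%C = RtoC 0 by ring. rewrite Cmod_0. have := eta_pos; lra. }
exists Oset. split; first exact Oset_open. split; first exact Oset_zc.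
exists xs, lam. split; first exact C1_xs. split; first exact C1_lam.
split. { rewrite /xs Etc -/P1c. have HP1 := HP.
  have -> : xc = ((xc * P1 s zc tc) * / P1c)%C by rewrite /P1c; field; exact HP1. rewrite Hx. ring. }
split. { by rewrite /lam Etc Hl. }
split. { move=> z Hz. by apply xs_lam_eqs. }
split. { move=> xs' lam' H1 H2 E1 E2 Heq z Hz. apply: (uniq_main xs' lam' H1 H2 Heq Hs1 z Hz).
  by rewrite /tp E1 E2 Htc. }
move=> Hdom. split.
- move=> z Hz. have [_ [Hf [Hm _]]] := Hdom z Hz. rewrite Hm. by rewrite Hf.
- by apply C1_rho. Qed.
End WithHyp. End Core.

Lemma Pz_at0 {N} (a : 'I_N -> C) (n : 'I_N -> nat) z : (forall i, (1 <= n i)%coq_nat) -> Pz a n z (RtoC 0) = RtoC 0.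
Proof. move=> Hn. rewrite /Pz.
have -> : \big[Cplus/RtoC 0]_(i < N) (z i * (a i * Cpow (RtoC 0) (n i)))%C = \big[Cplus/RtoC 0]_(i < N) (RtoC 0 * z i)%C.
{ apply bsum_ext => i. have := Hn i. case: (n i) => [|k] Hk; first lia. rewrite Cpow_S. ring. }
rewrite bsum_scal. ring. Qed.

Lemma Cmult_eq0 (a b : C) : (a * b)%C = RtoC 0 -> a = RtoC 0 \/ b = RtoC 0.
Proof. move=> E. have : Cmod a * Cmod b = 0 by rewrite -Cmod_mult E Cmod_0.
move=> /Rmult_integral [H|H]; [left | right]; by apply Cmod_eq_0. Qed.

Theorem lemma3p7
  (N : nat) (s : 'I_N -> nat)
  (HN : (1 <= N)%coq_nat)
  (Hs2 : forall i : 'I_N, (2 <= s i)%coq_nat)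
  (Hsinc : forall i j : 'I_N, (nat_of_ord i < nat_of_ord j)%coq_nat -> (s i < s j)%coq_nat)
  (zc : CN N) (xc lamc : C)
  (Hzc : crit_set s zc)
  (Hxc : singular_pt s zc xc)
  (Hlamc : branch_value s zc xc lamc)
  (HF : F s zc lamc xc = RtoC 0)
  (HFy : dyF s zc lamc xc = RtoC 0)
  (HFyy : dyyF s zc lamc xc <> RtoC 0) :
  exists O : CN N -> Prop,
    CN_open O /\ O zc /\
    exists (xs lam : CN N -> C),
      C1_on xs O /\ C1_on lam O /\
      xs zc = xc /\ lam zc = lamc /\
      (forall z, O z -> F s z (lam z) (xs z) = RtoC 0 /\ dyF s z (lam z) (xs z) = RtoC 0) /\
      (forall xs' lam' : CN N -> C,
         C1_on xs' O -> C1_on lam' O -> xs' zc = xc -> lam' zc = lamc ->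
         (forall z, O z -> F s z (lam' z) (xs' z) = RtoC 0 /\ dyF s z (lam' z) (xs' z) = RtoC 0) ->
         forall z, O z -> xs' z = xs z /\ lam' z = lam z) /\
      ((forall z, O z -> dominant s z /\ singular_pt s z (xs z)) ->
         (forall z, O z -> rho_star s z = Finite (Cmod (xs z))) /\
         C1_on (fun z => real (rho_star s z)) O).
Proof.
have Hs1 : forall i, (1 <= s i)%coq_nat by move=> i; have := Hs2 i; lia.
set tc := (xc * lamc)%C.
rewrite dyF_eq2 // in HFy. rewrite F_eq in HF.
have Hx : (xc * P1 s zc tc)%C = RtoC 1.
{ transitivity (1 - (1 - xc * P1 s zc (xc * lamc)))%C; first (rewrite /tc; ring). rewrite HFy. ring. }
have Hl : lamc = (1 + gP s zc tc)%C.
{ transitivity ((lamc - 1 - gP s zc (xc * lamc)) + 1 + gP s zc (xc * lamc))%C; first ring. rewrite HF /tc. ring. }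
have HP : P1c s zc tc <> RtoC 0.
{ rewrite /P1c => E. move: Hx. rewrite E. move=> E'. have : Cmod (xc * RtoC 0)%C = Cmod (RtoC 1) by rewrite E'.
  rewrite Cmod_mult Cmod_0 Cmod_1. lra. }
have H0 : Hf s zc tc = RtoC 0.
{ rewrite /Hf H_eq //. transitivity (lamc * (xc * P1 s zc tc) - (1 + gP s zc tc))%C; first (rewrite /tc; ring).
  rewrite Hx -Hl. ring. }
have HA : Ac s zc tc <> RtoC 0.
{ move=> E. have R := dyyF_rel s zc lamc xc Hs2. rewrite -/tc in R. rewrite /Ac in E. rewrite E in R.
  have : (lamc * lamc * dyyF s zc lamc xc)%C = RtoC 0 by rewrite R; ring.
  move=> /Cmult_eq0 [/Cmult_eq0 [L|L]|L] //.
  - move: Hl. rewrite /tc L. have -> : (xc * RtoC 0)%C = RtoC 0 by ring. rewrite /gP Pz_at0 //.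
    move=> E'. have : Cmod (RtoC 0) = Cmod (1 + RtoC 0)%C by rewrite -E'. rewrite Cmod_0.
    have -> : (1 + RtoC 0)%C = RtoC 1 by ring. rewrite Cmod_1. lra.
  - move: Hl. rewrite /tc L. have -> : (xc * RtoC 0)%C = RtoC 0 by ring. rewrite /gP Pz_at0 //.
    move=> E'. have : Cmod (RtoC 0) = Cmod (1 + RtoC 0)%C by rewrite -E'. rewrite Cmod_0.
    have -> : (1 + RtoC 0)%C = RtoC 1 by ring. rewrite Cmod_1. lra. }
exact: (assembly s zc tc HA HP H0 xc lamc Hs1 Hx Hl erefl).
Qed.
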